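(* Let $\mathcal C\subset\mathbb R^2$ be a nonempty open bounded convex set with $0\in\mathcal C$, and let $P,Q$ be distinct points of $\mathbb R^2$ such that the closed segments $[P,Q]$ and $[-P,-Q]$ are contained in $\partial\mathcal C$. Let $\mathcal T$ be the open convex hull of $P,Q,-P,-Q$. Then for every $R>0$: (1) $\mathcal B_{\mathcal C}(0,R)\cap P0Q=\mathcal B_{\mathcal T}(0,R)\cap P0Q$; (2) $\mu_{\mathcal C}\big(\mathcal B_{\mathcal C}(0,R)\cap P0Q\big)\le 2\pi R^2$.
   Context: Let $\mathcal C\subset\mathbb R^m$ be a nonempty open bounded convex set. For distinct $p,q\in\mathcal C$, let $a,b$ be the intersection points of the straight line through $p,q$ with $\partial\mathcal C$, labelled so that $p=(1-s)a+sb$ and $q=(1-t)a+tb$ with $0<s<t<1$; the Hilbert metric is $d_{\mathcal C}(p,q)=\frac12\ln\!\big(\frac{1-s}{s}\cdot\frac{t}{1-t}\big)$, and $d_{\mathcal C}(p,p)=0$. The associated Finsler norm at $p\in\mathcal C$ is $F_{\mathcal C}(p,v)=\frac12\big(\frac1{t^-}+\frac1{t^+}\big)$ for $v\neq0$, where $t^\pm>0$ are the unique numbers with $p-t^-v\in\partial\mathcal C$ and $p+t^+v\in\partial\mathcal C$, and $F_{\mathcal C}(p,0)=0$. Let $B_{\mathcal C}(p)=\{v\in\mathbb R^m : F_{\mathcal C}(p,v)<1\}$, let $\mathrm{vol}$ be Lebesgue measure on $\mathbb R^m$ and $\omega_m$ the Lebesgue volume of the Euclidean unit ball (so $\omega_2=\pi$).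 The Hilbert measure is $\mu_{\mathcal C}(A)=\int_A\frac{\omega_m}{\mathrm{vol}(B_{\mathcal C}(p))}\,d\mathrm{vol}(p)$ for Borel $A\subset\mathcal C$. When $0\in\mathcal C$ and $R>0$, $\mathcal B_{\mathcal C}(0,R)=\{p\in\mathcal C : d_{\mathcal C}(0,p)<R\}$ denotes the open metric ball. The same notation applies to the open convex set $\mathcal T$. For three distinct points $a,b,c\in\mathbb R^2$, $abc$ denotes their open convex hull (open triangle); so $P0Q$ is the open triangle with vertices $P$, $0$, $Q$. *)

(* Defs.v *)
From Stdlib Require Import Reals Lra ClassicalEpsilon.
Open Scope R_scope.

Definition pt : Type := (R * R)%type.
Definition porig : pt := (0, 0).
Definition padd (p q : pt) : pt := (fst p + fst q, snd p + snd q).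
Definition pscal (a : R) (p : pt) : pt := (a * fst p, a * snd p).
Definition popp (p : pt) : pt := pscal (-1) p.
Definition pnorm (p : pt) : R := sqrt (fst p ^ 2 + snd p ^ 2).
Definition pdist (p q : pt) : R := pnorm (padd p (popp q)).

Definition is_open (C : pt -> Prop) : Prop :=
  forall p, C p -> exists e, 0 < e /\ forall q, pdist q p < e -> C q.
Definition is_bounded (C : pt -> Prop) : Prop :=
  exists M, forall p, C p -> pnorm p <= M.
Definition is_convex (C : pt -> Prop) : Prop :=
  forall p q t, C p -> C q -> 0 <= t <= 1 ->
    C (padd (pscal (1 - t) p) (pscal t q)).
Definition closure (C : pt -> Prop) (x : pt) : Prop :=
  forall e, 0 < e -> exists q, C q /\ pdist q x < e.
(** boundary = closure minus interior (C is open, so interior = C) *)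
Definition boundary (C : pt -> Prop) (x : pt) : Prop :=
  closure C x /\ ~ C x.

Definition segment (P Q : pt) (x : pt) : Prop :=
  exists t, 0 <= t <= 1 /\ x = padd (pscal (1 - t) P) (pscal t Q).

Definition open_hull3 (a b c : pt) (x : pt) : Prop :=
  exists l1 l2 l3, 0 < l1 /\ 0 < l2 /\ 0 < l3 /\ l1 + l2 + l3 = 1 /\
    x = padd (pscal l1 a) (padd (pscal l2 b) (pscal l3 c)).
Definition open_hull4 (a b c d : pt) (x : pt) : Prop :=
  exists l1 l2 l3 l4, 0 < l1 /\ 0 < l2 /\ 0 < l3 /\ 0 < l4 /\
    l1 + l2 + l3 + l4 = 1 /\
    x = padd (pscal l1 a) (padd (pscal l2 b) (padd (pscal l3 c) (pscal l4 d))).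

Definition hilbert_dist (C : pt -> Prop) (p q : pt) (d : R) : Prop :=
  (p = q /\ d = 0) \/
  (p <> q /\ exists a b s t,
      boundary C a /\ boundary C b /\ 0 < s /\ s < t /\ t < 1 /\
      p = padd (pscal (1 - s) a) (pscal s b) /\
      q = padd (pscal (1 - t) a) (pscal t b) /\
      d = / 2 * ln ((1 - s) / s * (t / (1 - t)))).

Definition hilbert_ball (C : pt -> Prop) (Rad : R) (p : pt) : Prop :=
  C p /\ exists d, hilbert_dist C porig p d /\ d < Rad.

Definition finsler (C : pt -> Prop) (p v : pt) (f : R) : Prop :=
  (v = porig /\ f = 0) \/
  (v <> porig /\ exists tm tp, 0 < tm /\ 0 < tp /\
      boundary C (padd p (pscal (- tm) v)) /\
      boundary C (padd p (pscal tp v)) /\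
      f = / 2 * (/ tm + / tp)).

Definition finsler_ball (C : pt -> Prop) (p : pt) (v : pt) : Prop :=
  exists f, finsler C p v f /\ f < 1.

(** * Lebesgue (outer) measure via countable covers by closed boxes *)
Record box2 := Box2 { b2x1 : R; b2x2 : R; b2y1 : R; b2y2 : R }.
Definition box2_vol (b : box2) : R :=
  Rmax 0 (b2x2 b - b2x1 b) * Rmax 0 (b2y2 b - b2y1 b).
Definition in_box2 (b : box2) (p : pt) : Prop :=
  b2x1 b <= fst p <= b2x2 b /\ b2y1 b <= snd p <= b2y2 b.
Definition cover_sum2 (A : pt -> Prop) (s : R) : Prop :=
  exists c : nat -> box2,
    (forall x, A x -> exists n, in_box2 (c n) x) /\
    Un_cv (fun N => sum_f_R0 (fun n => box2_vol (c n)) N) s.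
(** Lebesgue measure of A (the infimum of the cover sums; used only for
    bounded sets, where it is finite). *)
Definition lebesgue2 (A : pt -> Prop) : R :=
  epsilon (inhabits 0) (fun m =>
    (forall s, cover_sum2 A s -> m <= s) /\
    (forall e, 0 < e -> exists s, cover_sum2 A s /\ s < m + e)).

Record box3 := Box3 { b3x1 : R; b3x2 : R; b3y1 : R; b3y2 : R;
                      b3z1 : R; b3z2 : R }.
Definition box3_vol (b : box3) : R :=
  Rmax 0 (b3x2 b - b3x1 b) * Rmax 0 (b3y2 b - b3y1 b) *
  Rmax 0 (b3z2 b - b3z1 b).
Definition in_box3 (b : box3) (x : pt * R) : Prop :=
  b3x1 b <= fst (fst x) <= b3x2 b /\ b3y1 b <= snd (fst x) <= b3y2 b /\
  b3z1 b <= snd x <= b3z2 b.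
Definition cover_sum3 (S : pt * R -> Prop) (s : R) : Prop :=
  exists c : nat -> box3,
    (forall x, S x -> exists n, in_box3 (c n) x) /\
    Un_cv (fun N => sum_f_R0 (fun n => box3_vol (c n)) N) s.
Definition lebesgue3_le (S : pt * R -> Prop) (K : R) : Prop :=
  forall e, 0 < e -> exists s, cover_sum3 S s /\ s <= K + e.

(** * Hilbert measure: density omega_2 / vol(B_C(p)) with omega_2 = PI *)
Definition hilbert_density (C : pt -> Prop) (p : pt) : R :=
  PI / lebesgue2 (finsler_ball C p).

(** mu_C(A) <= K, where mu_C(A) = int_A density dvol is expressed as the
    3-dimensional Lebesgue measure of the subgraph {(p,y) | p in A, 0<=y<density p}. *)
Definition hilbert_measure_le (C : pt -> Prop) (A : pt -> Prop) (K : R) : Prop :=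
  lebesgue3_le (fun x => A (fst x) /\ 0 <= snd x < hilbert_density C (fst x)) K.

(* Main.v *)
Require Import Defs.
From Stdlib Require Import Reals Lra Lia List ZArith ClassicalEpsilon.
Open Scope R_scope.
From mathcomp Require all_boot all_order all_algebra.
From mathcomp Require all_classical all_reals all_analysis.
From mathcomp Require Rstruct Rstruct_topology.
Module MC.
Import all_boot all_order all_algebra.
Import all_classical all_reals all_analysis.
Import Rstruct Rstruct_topology.
Import Order.TTheory GRing.Theory Num.Theory.
Local Open Scope classical_set_scope.
Local Open Scope ring_scope.

Definition m2 := product_measure1 (@lebesgue_measure R) (@lebesgue_measure R).

Lemma itv_meas (x1 x2 : R) : (@lebesgue_measure R) `[x1, x2] = (Rmax 0 (x2 - x1))%:E.
Proof.
rewrite lebesgue_measure_itv /=.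
case: ifP => h.
- rewrite lte_fin in h. congr EFin. rewrite Rmax_right //. 
  move/RltP: h. move=> h. lra.
- rewrite Rmax_left //. move/negbT: h. rewrite lte_fin -leNgt. move/RleP. lra.
Qed.
Lemma itv_meas_o (x1 x2 : R) : Rlt x1 x2 -> (@lebesgue_measure R) `]x1, x2[ = (x2 - x1)%:E.
Proof.
move=> h. rewrite lebesgue_measure_itv /= lte_fin.
have -> : (x1 < x2)%R by apply/RltP.
by rewrite EFinB.
Qed.
Lemma sumR (f : nat -> R) N : sum_f_R0 f N = \sum_(0 <= i < N.+1) f i.
Proof.
elim: N => [|N IH]. by rewrite big_nat1.
by rewrite big_nat_recr //= IH.
Qed.

Lemma rect_mc (a1 a2 b1 b2 s : R) (c : nat -> box2) :
  Rlt a1 a2 -> Rlt b1 b2 ->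
  (forall x : pt, Rlt a1 (fst x) /\ Rlt (fst x) a2 -> Rlt b1 (snd x) /\ Rlt (snd x) b2 ->
     exists n, in_box2 (c n) x) ->
  (forall N, Rle (sum_f_R0 (fun n => box2_vol (c n)) N) s) ->
  Rle ((a2 - a1) * (b2 - b1)) s.
Proof.
move=> ha hb hcov hsum.
pose A : set (measurableTypeR R * measurableTypeR R) := `]a1, a2[ `*` `]b1, b2[.
pose F n : set (measurableTypeR R * measurableTypeR R) := `[b2x1 (c n), b2x2 (c n)] `*` `[b2y1 (c n), b2y2 (c n)].
have mA : measurable A by apply: measurableX; exact: measurable_itv.
have mF : forall n, measurable (F n) by move=> n; apply: measurableX; exact: measurable_itv.
have sub : A `<=` \bigcup_n F n.
  move=> [x y] [/= hx hy].
  rewrite /= in_itv /= in hx. rewrite /= in_itv /= in hy.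
  case/andP: hx => /RltP hx1 /RltP hx2. case/andP: hy => /RltP hy1 /RltP hy2.
  have [n [[h1 h2] [h3 h4]]] := hcov (x, y) (conj hx1 hx2) (conj hy1 hy2).
  exists n => //. split; rewrite /= in_itv /=; apply/andP; split; apply/RleP => //.
have H := @measure_sigma_subadditive _ _ _ m2 A F mF mA sub.
have EA : m2 A = ((a2 - a1) * (b2 - b1))%:E.
  rewrite -[RHS]/(((a2 - a1) * (b2 - b1))%:E) EFinM -!itv_meas_o //.
  rewrite /m2 /A. 
  have := @product_measure1E _ _ (measurableTypeR R) (measurableTypeR R) R lebesgue_measure lebesgue_measure `]a1, a2[ `]b1, b2[.
  move=> h; rewrite h //; exact: measurable_itv.
have eF : forall n, m2 (F n) = (box2_vol (c n))%:E.
  move=> n. rewrite /box2_vol EFinM -!itv_meas /m2 /F.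
  have := @product_measure1E _ _ (measurableTypeR R) (measurableTypeR R) R lebesgue_measure lebesgue_measure `[b2x1 (c n), b2x2 (c n)] `[b2y1 (c n), b2y2 (c n)].
  move=> h; rewrite h //; exact: measurable_itv.
have H' : (m2 A <= \sum_(n <oo) m2 (F n))%E := H.
rewrite EA in H'.
have H'' : (((a2 - a1) * (b2 - b1))%:E <= \sum_(n <oo) (box2_vol (c n))%:E)%E.
  apply: (le_trans H'). apply: lee_nneseries.
  - move=> i _ _; exact: measure_ge0.
  - move=> n _; by rewrite eF.
clear H H'.
have Hp : forall N, (\sum_(0 <= k < N) (box2_vol (c k))%:E <= s%:E)%E.
  move=> [|N].
    rewrite big_geq // lee_fin. apply/RleP. apply: Rle_trans (hsum 0%N). simpl.
    rewrite /box2_vol. apply: Rmult_le_pos; apply Rmax_l.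
  rewrite sumEFin lee_fin -sumR. apply/RleP. exact: hsum.
have : (\sum_(n <oo) (box2_vol (c n))%:E <= s%:E)%E.
  apply: lime_le. apply: is_cvg_nneseries => n _ _. rewrite lee_fin. apply/RleP.
    rewrite /box2_vol. apply: Rmult_le_pos; apply Rmax_l.
  by apply: nearW => N; exact: Hp.
move=> H2.
have := le_trans H'' H2. rewrite lee_fin. by move/RleP.
Qed.

End MC.
Open Scope R_scope.
Definition rect_mc := MC.rect_mc.

Fixpoint rsum (f : nat -> R) (n : nat) : R :=
  match n with O => 0 | S m => rsum f m + f m end.

Lemma rsum_sum_f (f : nat -> R) N : rsum f (S N) = sum_f_R0 f N.
Proof. induction N. simpl. ring. rewrite tech5. rewrite <- IHN. simpl. ring. Qed.

Lemma rsum_le (f g : nat -> R) n : (forall i, (i < n)%nat -> f i <= g i) -> rsum f n <= rsum g n.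
Proof. induction n; intros H; simpl. lra. assert (f n <= g n) by (apply H; lia).
  assert (rsum f n <= rsum g n) by (apply IHn; intros; apply H; lia). lra. Qed.



Lemma rsum_nonneg (f : nat -> R) n : (forall i, (i < n)%nat -> 0 <= f i) -> 0 <= rsum f n.
Proof. induction n; intros H; simpl. lra. assert (0 <= f n) by (apply H; lia).
  assert (0 <= rsum f n) by (apply IHn; intros; apply H; lia). lra. Qed.

Lemma rsum_plus (f g : nat -> R) n : rsum (fun i => f i + g i) n = rsum f n + rsum g n.
Proof. induction n; simpl. ring. rewrite IHn. ring. Qed.

Lemma rsum_scal (f : nat -> R) k n : rsum (fun i => k * f i) n = k * rsum f n.
Proof. induction n; simpl. ring. rewrite IHn. ring. Qed.

Lemma rsum_const k n : rsum (fun _ => k) n = INR n * k.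
Proof. induction n; simpl rsum. simpl. ring. rewrite IHn. rewrite S_INR. ring. Qed.

Lemma rsum_tele (g : nat -> R) n : rsum (fun i => g i - g (S i)) n = g O - g n.
Proof. induction n; simpl. ring. rewrite IHn. ring. Qed.

Lemma rsum_ext (f g : nat -> R) n : (forall i, (i < n)%nat -> f i = g i) -> rsum f n = rsum g n.
Proof. induction n; intros H; simpl. auto. rewrite IHn. rewrite H. auto. lia. intros; apply H; lia. Qed.

Lemma rsum_prod (a b : nat -> R) n m :
  rsum (fun i => rsum (fun j => a i * b j) m) n = rsum a n * rsum b m.
Proof. induction n; simpl. ring. rewrite IHn. rewrite rsum_scal. ring. Qed.

Lemma sum_f_le_rsum (f : nat -> R) N : sum_f_R0 f N = rsum f (S N).
Proof. symmetry; apply rsum_sum_f. Qed.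

Lemma geom_bound e n : 0 < e -> rsum (fun i => e / 2 ^ (S i)) n = e * (1 - / 2 ^ n).
Proof. intros He. induction n. simpl. field.
  transitivity (rsum (fun i => e / 2 ^ S i) n + e / 2 ^ S n). reflexivity.
  rewrite IHn. simpl. field. apply pow_nonzero. lra. Qed.

Lemma pow2_pos n : 0 < 2 ^ n.
Proof. apply pow_lt. lra. Qed.

Section Gen.
Variables (Bx X : Type) (vol : Bx -> R) (inb : Bx -> X -> Prop).

Definition cov (S : X -> Prop) (s : R) : Prop :=
  exists c : nat -> Bx,
    (forall x, S x -> exists n, inb (c n) x) /\
    Un_cv (fun N => sum_f_R0 (fun n => vol (c n)) N) s.

Fixpoint lsum (l : list Bx) : R := match l with nil => 0 | b :: l' => vol b + lsum l' end.

Lemma lsum_app l1 l2 : lsum (l1 ++ l2) = lsum l1 + lsum l2.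
Proof. induction l1; simpl. ring. rewrite IHl1. ring. Qed.

Hypothesis vol_nn : forall b, 0 <= vol b.

Lemma lsum_nn l : 0 <= lsum l.
Proof. induction l; simpl. lra. specialize (vol_nn a). lra. Qed.

Lemma cov_mono S S' s : cov S s -> (forall x, S' x -> S x) -> cov S' s.
Proof. intros [c [H1 H2]] H. exists c. split; auto. Qed.

Lemma partial_growing (c : nat -> Bx) : Un_growing (fun N => sum_f_R0 (fun n => vol (c n)) N).
Proof. intro n. rewrite tech5. specialize (vol_nn (c (S n))). lra. Qed.

Lemma cov_partial_le (c : nat -> Bx) s : Un_cv (fun N => sum_f_R0 (fun n => vol (c n)) N) s ->
  forall N, sum_f_R0 (fun n => vol (c n)) N <= s.
Proof. intros H N. apply (growing_ineq _ s (partial_growing c) H). Qed.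

Lemma cov_nonneg S s : cov S s -> 0 <= s.
Proof. intros [c [_ H]]. eapply Rle_trans; [|apply (cov_partial_le c s H 0)]. simpl. apply vol_nn. Qed.

Lemma cov_of_bound S (c : nat -> Bx) K :
  (forall x, S x -> exists n, inb (c n) x) ->
  (forall N, sum_f_R0 (fun n => vol (c n)) N <= K) ->
  exists s, cov S s /\ s <= K.
Proof.
  intros Hc Hb.
  destruct (growing_cv _ (partial_growing c)) as [l Hl].
  { exists K. intros y [N ->]. apply Hb. }
  exists l. split. exists c. split; auto.
  destruct (Rle_dec l K) as [h|h]; auto. exfalso.
  destruct (Hl (l - K)) as [N HN]. lra.
  specialize (HN N (le_n N)). specialize (Hb N). unfold R_dist in HN.
  apply Rabs_def2 in HN. lra.
Qed.

Lemma sum_nth_le (d : Bx) : vol d = 0 -> forall l N,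
  sum_f_R0 (fun n => vol (nth n l d)) N <= lsum l.
Proof.
  intros Hd l. induction l as [|b l IH]; intros N.
  - simpl. induction N. simpl. rewrite Hd. lra. rewrite tech5. simpl. rewrite Hd. lra.
  - destruct N. simpl. specialize (lsum_nn l). lra.
    rewrite decomp_sum by lia. simpl. specialize (IH N). simpl in IH. lra.
Qed.

Lemma cov_of_list S (l : list Bx) (d : Bx) : vol d = 0 ->
  (forall x, S x -> exists b, In b l /\ inb b x) -> exists s, cov S s /\ s <= lsum l.
Proof.
  intros Hd Hc. apply (cov_of_bound S (fun n => nth n l d)).
  - intros x Hx. destruct (Hc x Hx) as [b [Hb1 Hb2]].
    destruct (In_nth l b d Hb1) as [n [_ Hn]]. exists n. rewrite Hn. auto.
  - apply sum_nth_le. auto.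
Qed.

Section Flat.
Variable L : nat -> list Bx.
Fixpoint FL (N : nat) : list Bx := match N with O => nil | S M => FL M ++ L M end.

Lemma FL_nth (d : Bx) N M m : (N <= M)%nat -> (m < length (FL N))%nat -> nth m (FL M) d = nth m (FL N) d.
Proof.
  intros H. induction H; intros Hm. auto. simpl. rewrite app_nth1. auto.
  assert (length (FL N) <= length (FL m0))%nat.
  { clear -H. induction H. lia. simpl. rewrite length_app. lia. }
  lia.
Qed.

Hypothesis Lne : forall n, L n <> nil.

Lemma FL_len N : (N <= length (FL N))%nat.
Proof. induction N. simpl. lia. simpl. rewrite length_app. specialize (Lne N).
  destruct (L N). congruence. simpl. lia. Qed.

Lemma FL_lsum N : lsum (FL N) = rsum (fun n => lsum (L n)) N.
Proof. induction N; simpl. auto. rewrite lsum_app, IHN. auto. Qed.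
End Flat.

Lemma refine_cov (g : X -> X) (k : R) (d : Bx) :
  vol d = 0 -> 0 <= k ->
  (forall b e, 0 < e -> exists l, l <> nil /\
     (forall x, inb b (g x) -> exists b', In b' l /\ inb b' x) /\ lsum l <= k * vol b + e) ->
  forall Sx s e, cov Sx s -> 0 < e -> exists s', cov (fun x => Sx (g x)) s' /\ s' <= k * s + e.
Proof.
  intros Hd Hk Href Sx s e [c [Hc Hs]] He.
  assert (HL : forall n, {l | l <> nil /\ (forall x, inb (c n) (g x) -> exists b', In b' l /\ inb b' x)
                     /\ lsum l <= k * vol (c n) + e / 2 ^ (S n)}).
  { intro n. apply constructive_indefinite_description. apply Href.
    apply Rdiv_lt_0_compat. auto. apply pow2_pos. }
  set (L := fun n => proj1_sig (HL n)).
  assert (Lne : forall n, L n <> nil) by (intro n; unfold L; destruct (HL n) as [l [? ?]]; auto).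
  set (f := fun m => nth m (FL L (S m)) d).
  apply (cov_of_bound _ f).
  - intros x Hx. destruct (Hc (g x) Hx) as [n Hn].
    destruct (proj2_sig (HL n)) as [_ [Hcov _]]. destruct (Hcov x Hn) as [b' [Hb' Hin]].
    fold (L n) in Hb'. destruct (In_nth (L n) b' d Hb') as [k0 [Hk0 Hnth]].
    set (m := (length (FL L n) + k0)%nat).
    assert (Hm : nth m (FL L (S n)) d = b').
    { simpl. unfold m. rewrite app_nth2 by lia. rewrite Nat.add_comm, Nat.add_sub. auto. }
    assert (Hmlen : (m < length (FL L (S n)))%nat). { simpl. rewrite length_app. unfold m. lia. }
    exists m. unfold f.
    destruct (Nat.le_gt_cases (S n) (S m)) as [h|h].
    + rewrite (FL_nth L d (S n) (S m) m h Hmlen). rewrite Hm. auto.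
    + assert (Hm2 : (m < length (FL L (S m)))%nat) by (specialize (FL_len L Lne (S m)); lia).
      rewrite <- (FL_nth L d (S m) (S n) m) by (auto; lia). rewrite Hm. auto.
  - intros N.
    assert (E1 : sum_f_R0 (fun n => vol (f n)) N = sum_f_R0 (fun n => vol (nth n (FL L (S N)) d)) N).
    { apply sum_eq. intros i Hi. unfold f. f_equal. symmetry. apply FL_nth. lia.
      specialize (FL_len L Lne (S i)). lia. }
    rewrite E1. eapply Rle_trans. apply sum_nth_le. auto.
    rewrite FL_lsum.
    eapply Rle_trans. apply rsum_le with (g := fun n => k * vol (c n) + e / 2 ^ (S n)).
    { intros i _. unfold L. destruct (HL i) as [l [? [? ?]]]. simpl. auto. }
    rewrite rsum_plus, rsum_scal, geom_bound by auto.
    rewrite rsum_sum_f.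
    specialize (cov_partial_le c s Hs N). intros H1.
    assert (0 < / 2 ^ S N) by (apply Rinv_0_lt_compat, pow2_pos).
    assert (k * sum_f_R0 (fun n : nat => vol (c n)) N <= k * s) by (apply Rmult_le_compat_l; auto).
    nra.
Qed.
End Gen.

Arguments cov {Bx X} vol inb S s.
Arguments lsum {Bx} vol l.

Lemma cover_sum2_cov A s : cover_sum2 A s <-> cov box2_vol in_box2 A s.
Proof. reflexivity. Qed.
Lemma cover_sum3_cov A s : cover_sum3 A s <-> cov box3_vol in_box3 A s.
Proof. reflexivity. Qed.

Lemma nat_unbounded (r : R) : exists n : nat, r < INR n.
Proof.
  destruct (archimed r) as [H1 _].
  exists (Z.to_nat (up r)). rewrite INR_IZR_INZ.
  destruct (Z_le_gt_dec 0 (up r)) as [h|h].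
  - rewrite Z2Nat.id by lia. lra.
  -
    assert (IZR (up r) < 0) by (apply IZR_lt; lia). 
    replace (Z.to_nat (up r)) with 0%nat by lia. simpl. lra.
Qed.

Lemma Rdiv_le_0_compat a b : 0 <= a -> 0 < b -> 0 <= a / b.
Proof. intros. unfold Rdiv. apply Rmult_le_pos; auto. apply Rlt_le, Rinv_0_lt_compat; auto. Qed.
Lemma div_le_l a b c : 0 < b -> a <= c * b -> a / b <= c.
Proof. intros Hb H. apply Rmult_le_reg_r with b; auto. replace (a / b * b) with a by (field; lra). auto. Qed.

Lemma cell_lemma (K : nat) (a d y : R) : (1 <= K)%nat -> 0 <= d -> a <= y <= a + INR K * d ->
  exists k, (k < K)%nat /\ a + INR k * d <= y <= a + INR (S k) * d.
Proof.
  intros HK Hd. induction HK as [|K HK IH]; intros Hy.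
  - exists 0%nat. split. lia. simpl in *. lra.
  - destruct (Rle_dec y (a + INR K * d)) as [h|h].
    + destruct IH as [k [Hk1 Hk2]]. lra. exists k. split. lia. auto.
    + exists K. split. lia. lra.
Qed.

Definition box0 : box2 := Box2 0 0 0 0.
Lemma box0_vol : box2_vol box0 = 0.
Proof. unfold box2_vol, box0; simpl. rewrite Rmax_left by lra. ring. Qed.
Lemma box2_vol_nn b : 0 <= box2_vol b.
Proof. unfold box2_vol. apply Rmult_le_pos; apply Rmax_l. Qed.
Lemma box3_vol_nn b : 0 <= box3_vol b.
Proof. unfold box3_vol. repeat apply Rmult_le_pos; apply Rmax_l. Qed.

Definition RP2 (g : pt -> pt) (k : R) : Prop :=
  forall b e, 0 < e -> exists l, l <> nil /\
     (forall x, in_box2 b (g x) -> exists b', In b' l /\ in_box2 b' x) /\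
     lsum box2_vol l <= k * box2_vol b + e.

Lemma RP2_empty (g : pt -> pt) k b e : 0 <= k -> 0 < e -> ~ (b2x1 b <= b2x2 b /\ b2y1 b <= b2y2 b) ->
  exists l, l <> nil /\
     (forall x, in_box2 b (g x) -> exists b', In b' l /\ in_box2 b' x) /\
     lsum box2_vol l <= k * box2_vol b + e.
Proof.
  intros Hk He Hne. exists (box0 :: nil). split. discriminate. split.
  - intros x [H1 H2]. exfalso. apply Hne. lra.
  - simpl. rewrite box0_vol. assert (0 <= k * box2_vol b) by (apply Rmult_le_pos; auto; apply box2_vol_nn). lra.
Qed.

Definition sw (x : pt) : pt := (snd x, fst x).
Lemma RP2_sw : RP2 sw 1.
Proof.
  intros [x1 x2 y1 y2] e He. exists (Box2 y1 y2 x1 x2 :: nil). split. discriminate. split.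
  - intros [u v] [H1 H2]. simpl in *. exists (Box2 y1 y2 x1 x2). split. left; auto. split; simpl; auto.
  - simpl. unfold box2_vol; simpl. lra.
Qed.

Definition dg (a b : R) (x : pt) : pt := (a * fst x, b * snd x).
Definition lo (a x1 x2 : R) := if Rlt_dec 0 a then x1 / a else x2 / a.
Definition hi (a x1 x2 : R) := if Rlt_dec 0 a then x2 / a else x1 / a.

Lemma lohi_in (a x1 x2 x : R) : a <> 0 -> x1 <= a * x <= x2 -> lo a x1 x2 <= x <= hi a x1 x2.
Proof.
  intros Ha H. unfold lo, hi. destruct (Rlt_dec 0 a) as [h|h].
  - split; apply Rmult_le_reg_l with a; auto.
    replace (a * (x1 / a)) with x1 by (field; lra). lra.
    replace (a * (x2 / a)) with x2 by (field; lra). lra.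
  - assert (a < 0) by lra. split; apply Rmult_le_reg_l with (- a); try lra.
    replace (- a * (x2 / a)) with (- x2) by (field; lra). lra.
    replace (- a * (x1 / a)) with (- x1) by (field; lra). lra.
Qed.

Lemma lohi_len (a x1 x2 : R) : a <> 0 -> x1 <= x2 -> hi a x1 x2 - lo a x1 x2 = (x2 - x1) / Rabs a.
Proof.
  intros Ha H. unfold lo, hi. destruct (Rlt_dec 0 a) as [h|h].
  - rewrite Rabs_right by lra. field. auto.
  - rewrite Rabs_left by lra. field. auto.
Qed.

Lemma RP2_dg a b : a <> 0 -> b <> 0 -> RP2 (dg a b) (/ (Rabs a * Rabs b)).
Proof.
  intros Ha Hb [x1 x2 y1 y2] e He.
  assert (Hk : 0 <= / (Rabs a * Rabs b)).
  { apply Rlt_le, Rinv_0_lt_compat. apply Rmult_lt_0_compat; apply Rabs_pos_lt; auto. }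
  destruct (classic (x1 <= x2 /\ y1 <= y2)) as [[hx hy]|hne].
  2: { apply RP2_empty; auto. }
  exists (Box2 (lo a x1 x2) (hi a x1 x2) (lo b y1 y2) (hi b y1 y2) :: nil). split. discriminate. split.
  - intros [u v] [H1 H2]. simpl in *. eexists. split. left; reflexivity.
    split; simpl; apply lohi_in; auto.
  - simpl. unfold box2_vol; simpl.
    assert (E1 := lohi_len a x1 x2 Ha hx). assert (E2 := lohi_len b y1 y2 Hb hy).
    assert (0 < Rabs a) by (apply Rabs_pos_lt; auto). assert (0 < Rabs b) by (apply Rabs_pos_lt; auto).
    assert (0 <= (x2 - x1) / Rabs a) by (apply Rdiv_le_0_compat; lra).
    assert (0 <= (y2 - y1) / Rabs b) by (apply Rdiv_le_0_compat; lra).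
    rewrite !Rmax_right by lra. rewrite E1, E2.
    replace ((x2 - x1) / Rabs a * ((y2 - y1) / Rabs b)) with (/ (Rabs a * Rabs b) * ((x2 - x1) * (y2 - y1))) by (field; lra).
    lra.
Qed.

Definition ushear (c : R) (x : pt) : pt := (fst x + c * snd x, snd x).

Lemma Rmax_Rmin_diff u v : Rmax u v - Rmin u v = Rabs (u - v).
Proof. unfold Rmax, Rmin. destruct (Rle_dec u v).
  rewrite Rabs_left1 by lra. ring. rewrite Rabs_right by lra. ring. Qed.

Lemma rsum_shift (g : nat -> R) K : rsum g (S K) = g O + rsum (fun k => g (S k)) K.
Proof. induction K. simpl. ring. transitivity (rsum g (S K) + g (S K)). reflexivity.
  rewrite IHK. simpl. ring. Qed.

Lemma lsum_map_seq (f : nat -> box2) K : lsum box2_vol (map f (seq 0 K)) = rsum (fun k => box2_vol (f k)) K.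
Proof.
  assert (H : forall m, lsum box2_vol (map f (seq m K)) = rsum (fun k => box2_vol (f (m + k)%nat)) K).
  { induction K; intros m. simpl. auto. simpl (seq m (S K)). simpl map. simpl lsum.
    rewrite IHK. rewrite rsum_shift. rewrite Nat.add_0_r. f_equal. apply rsum_ext.
    intros i _. f_equal. f_equal. lia. }
  rewrite H. apply rsum_ext. auto.
Qed.

Lemma RP2_ushear c : RP2 (ushear c) 1.
Proof.
  intros [x1 x2 y1 y2] e He.
  destruct (classic (x1 <= x2 /\ y1 <= y2)) as [[hx hy]|hne].
  2: { apply RP2_empty; auto; lra. }
  set (h := y2 - y1). set (w := x2 - x1).
  destruct (nat_unbounded (Rabs c * h * h / e)) as [K0 HK0].
  set (K := S K0).
  assert (HKpos : 0 < INR K) by (unfold K; rewrite S_INR; specialize (pos_INR K0); lra).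
  set (dl := h / INR K).
  assert (Hdl : 0 <= dl) by (unfold dl; apply Rdiv_le_0_compat; unfold h; lra).
  set (yk := fun k : nat => y1 + INR k * dl).
  set (f := fun k : nat => Box2 (x1 - Rmax (c * yk k) (c * yk (S k))) (x2 - Rmin (c * yk k) (c * yk (S k))) (yk k) (yk (S k))).
  exists (map f (seq 0 K)). split.
  { unfold K. simpl. discriminate. }
  split.
  - intros [u v] [H1 H2]. unfold ushear in H1, H2. simpl in H1, H2.
    destruct (cell_lemma K y1 dl v) as [k [Hk1 Hk2]]. unfold K; lia. auto.
    { assert (Ey : y1 + INR K * dl = y2). { unfold dl. unfold h. field. lra. } rewrite Ey. lra. }
    exists (f k). split. apply in_map. apply in_seq. lia.
    unfold f, in_box2; simpl. fold (yk k) in Hk2. 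
    assert (yk (S k) = y1 + INR (S k) * dl) by auto.
    assert (Hcy : Rmin (c * yk k) (c * yk (S k)) <= c * v <= Rmax (c * yk k) (c * yk (S k))).
    { unfold Rmin, Rmax. destruct (Rle_dec (c * yk k) (c * yk (S k))); destruct (Rle_dec 0 c); nra. }
    split; lra.
  - rewrite lsum_map_seq.
    assert (Hv : forall k, box2_vol (f k) = (w + Rabs c * dl) * dl).
    { intro k. unfold box2_vol, f. cbn [b2x1 b2x2 b2y1 b2y2].
      set (m1 := c * yk k). set (m2 := c * yk (S k)).
      assert (Hd : m1 - m2 = -(c*dl)) by (unfold m1, m2, yk; rewrite S_INR; ring).
      assert (Hyd : yk (S k) - yk k = dl) by (unfold yk; rewrite S_INR; ring).
      rewrite Hyd. rewrite (Rmax_right 0 dl) by lra.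
      replace (x2 - Rmin m1 m2 - (x1 - Rmax m1 m2)) with (w + Rabs (m1-m2)) by (rewrite <- Rmax_Rmin_diff; unfold w; ring).
      rewrite Hd, Rabs_Ropp, Rabs_mult, (Rabs_right dl) by lra.
      rewrite Rmax_right. ring. specialize (Rabs_pos c). unfold w. nra. }
    rewrite (rsum_ext _ (fun _ => (w + Rabs c * dl) * dl)) by auto.
    rewrite rsum_const. unfold box2_vol; cbn [b2x1 b2x2 b2y1 b2y2]. fold h w.
    rewrite !Rmax_right by (unfold h, w; lra).
    replace (INR K * ((w + Rabs c * dl) * dl)) with (w * h + Rabs c * h * h / INR K) by (unfold dl; field; lra).
    assert (Rabs c * h * h / INR K <= e).
    { apply div_le_l. auto. unfold K. rewrite S_INR.
      assert (Rabs c * h * h <= e * INR K0).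
      { apply Rlt_le. replace (Rabs c * h * h) with ((Rabs c * h * h / e) * e) by (field; lra).
        rewrite Rmult_comm. apply Rmult_lt_compat_l; auto. }
      lra. }
    lra.
Qed.

Definition lift3 (g : pt -> pt) (x : pt * R) : pt * R := (g (fst x), snd x).

Definition goodG {Xt : Type} (cv : (Xt -> Prop) -> R -> Prop) (L : (pt -> pt) -> Xt -> Xt)
  (g : pt -> pt) (k : R) : Prop :=
  forall S s e, cv S s -> 0 < e -> exists s', cv (fun x => S (L g x)) s' /\ s' <= k * s + e.

Definition good2 := goodG cover_sum2 (fun g => g).
Definition good3 := goodG cover_sum3 lift3.

Lemma RP2_good2 g k : 0 <= k -> RP2 g k -> good2 g k.
Proof.
  intros Hk H S s e Hs He.
  apply (refine_cov box2 pt box2_vol in_box2 box2_vol_nn g k box0 box0_vol Hk H S s e Hs He).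
Qed.

Definition liftb (b : box2) (z1 z2 : R) : box3 := Box3 (b2x1 b) (b2x2 b) (b2y1 b) (b2y2 b) z1 z2.

Lemma lsum3_map (l : list box2) z1 z2 :
  lsum box3_vol (map (fun b => liftb b z1 z2) l) = lsum box2_vol l * Rmax 0 (z2 - z1).
Proof. induction l; simpl. ring. rewrite IHl. unfold box3_vol, box2_vol, liftb; simpl. ring. Qed.

Lemma RP2_good3 g k : 0 <= k -> RP2 g k -> good3 g k.
Proof.
  intros Hk H S s e Hs He.
  apply (refine_cov box3 (pt * R) box3_vol in_box3 box3_vol_nn (lift3 g) k
    (Box3 0 0 0 0 0 0)); auto.
  { unfold box3_vol; simpl. rewrite Rmax_left by lra. ring. }
  intros [x1 x2 y1 y2 z1 z2] e' He'.
  set (zl := Rmax 0 (z2 - z1)).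
  assert (Hzl : 0 <= zl) by apply Rmax_l.
  destruct (H (Box2 x1 x2 y1 y2) (e' / (zl + 1))) as [l [Hne [Hcov Hsum]]].
  { apply Rdiv_lt_0_compat; lra. }
  exists (map (fun b => liftb b z1 z2) l). split.
  { destruct l. congruence. discriminate. }
  split.
  - intros [p z] [Hx [Hy Hz]]. simpl in Hx, Hy, Hz.
    destruct (Hcov p (conj Hx Hy)) as [b' [Hb' Hin]].
    exists (liftb b' z1 z2). split. apply (in_map (fun b => liftb b z1 z2)). auto.
    destruct Hin as [Hin1 Hin2]. unfold liftb, in_box3; simpl. auto.
  - rewrite lsum3_map. fold zl.
    unfold box3_vol. simpl. fold zl.
    change (box2_vol (Box2 x1 x2 y1 y2)) with (Rmax 0 (x2 - x1) * Rmax 0 (y2 - y1)) in Hsum.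
    assert (lsum box2_vol l * zl <= (k * (Rmax 0 (x2 - x1) * Rmax 0 (y2 - y1)) + e' / (zl + 1)) * zl)
      by (apply Rmult_le_compat_r; auto).
    assert (e' / (zl + 1) * zl <= e').
    { replace (e' / (zl + 1) * zl) with (e' * zl / (zl + 1)) by (field; lra).
      apply div_le_l. lra. nra. }
    nra.
Qed.

Section GoodGen.
Context {Xt : Type} (cv : (Xt -> Prop) -> R -> Prop) (L : (pt -> pt) -> Xt -> Xt).
Hypothesis cv_mono : forall S S' s, cv S s -> (forall x, S' x -> S x) -> cv S' s.
Hypothesis cv_nn : forall S s, cv S s -> 0 <= s.
Hypothesis L_comp : forall g1 g2 x, L (fun y => g1 (g2 y)) x = L g1 (L g2 x).
Hypothesis L_ext : forall g1 g2 x, (forall y, g1 y = g2 y) -> L g1 x = L g2 x.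

Lemma goodG_comp g1 g2 k1 k2 : goodG cv L g1 k1 -> goodG cv L g2 k2 -> 0 <= k2 ->
  goodG cv L (fun y => g1 (g2 y)) (k2 * k1).
Proof.
  intros H1 H2 Hk2 S s e Hs He.
  destruct (H1 S s (e / (2 * (k2 + 1))) Hs) as [s1 [Hs1 Hs1b]].
  { apply Rdiv_lt_0_compat; lra. }
  destruct (H2 _ s1 (e / 2) Hs1) as [s2 [Hs2 Hs2b]]. lra.
  exists s2. split.
  - eapply cv_mono. exact Hs2. intros x Hx. cbv beta in *. rewrite L_comp in Hx. auto.
  - assert (k2 * s1 <= k2 * (k1 * s + e / (2 * (k2 + 1)))) by (apply Rmult_le_compat_l; auto).
    assert (k2 * (e / (2 * (k2 + 1))) <= e / 2).
    { replace (k2 * (e / (2 * (k2 + 1)))) with ((e / 2) * (k2 / (k2 + 1))) by (field; lra).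
      assert (k2 / (k2 + 1) <= 1) by (apply div_le_l; lra).
      assert (0 < e / 2) by lra. nra. }
    nra.
Qed.

Lemma goodG_ext g g' k : goodG cv L g k -> (forall y, g y = g' y) -> goodG cv L g' k.
Proof.
  intros H Heq S s e Hs He. destruct (H S s e Hs He) as [s' [Hs' Hb]].
  exists s'. split; auto. eapply cv_mono. exact Hs'. intros x Hx. cbv beta in *. rewrite (L_ext g g'); auto.
Qed.

Lemma goodG_le g k k' : goodG cv L g k -> k <= k' -> goodG cv L g k'.
Proof.
  intros H Hk S s e Hs He. destruct (H S s e Hs He) as [s' [Hs' Hb]].
  exists s'. split; auto. specialize (cv_nn S s Hs). nra.
Qed.

Hypothesis good_sw : goodG cv L sw 1.
Hypothesis good_dg : forall a b, a <> 0 -> b <> 0 -> goodG cv L (dg a b) (/ (Rabs a * Rabs b)).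
Hypothesis good_us : forall c, goodG cv L (ushear c) 1.

Definition lin (a b c d : R) (x : pt) : pt := (a * fst x + b * snd x, c * fst x + d * snd x).

Lemma good_lshear c : goodG cv L (fun y => sw (ushear c (sw y))) 1.
Proof.
  eapply goodG_le. apply goodG_comp. exact good_sw. apply goodG_comp. exact (good_us c). exact good_sw.
  lra. lra. lra.
Qed.

Lemma good_lin_a a b c d : a <> 0 -> a * d - b * c <> 0 -> goodG cv L (lin a b c d) (/ Rabs (a * d - b * c)).
Proof.
  intros Ha Hdet.
  set (dt := a * d - b * c).
  assert (Hd2 : dt / a <> 0) by (unfold Rdiv; apply Rmult_integral_contrapositive; split; auto; apply Rinv_neq_0_compat; auto).
  assert (G := goodG_comp _ _ _ _ (good_lshear (c / a)) (goodG_comp _ _ _ _ (good_dg a (dt / a) Ha Hd2) (good_us (b / a)) ltac:(lra)) ltac:(rewrite Rmult_1_l; apply Rlt_le, Rinv_0_lt_compat; apply Rmult_lt_0_compat; apply Rabs_pos_lt; auto)).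
  eapply goodG_le. eapply goodG_ext. exact G.
  - intros [x y]. unfold lin, sw, ushear, dg; simpl. f_equal. field; auto. unfold dt. field; auto.
  - right. replace (Rabs a * Rabs (dt / a)) with (Rabs dt). fold dt. ring.
    rewrite <- Rabs_mult. f_equal. field. auto.
Qed.

Lemma good_lin a b c d : a * d - b * c <> 0 -> goodG cv L (lin a b c d) (/ Rabs (a * d - b * c)).
Proof.
  intros Hdet. destruct (Req_dec a 0) as [Ha|Ha].
  - subst a. assert (Hb : b <> 0) by (intro; subst; apply Hdet; ring).
    assert (Hdet' : b * c - 0 * d <> 0) by (intro; apply Hdet; lra).
    assert (G := goodG_comp _ _ _ _ (good_lin_a b 0 d c Hb Hdet') good_sw ltac:(lra)).
    eapply goodG_le. eapply goodG_ext. exact G.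
    + intros [x y]. unfold lin, sw; simpl. f_equal; ring.
    + right. rewrite Rmult_1_l. f_equal. replace (0 * d - b * c) with (- (b * c - 0 * d)) by ring.
      rewrite Rabs_Ropp. auto.
  - apply good_lin_a; auto.
Qed.
End GoodGen.

Lemma good2_lin a b c d : a * d - b * c <> 0 -> good2 (lin a b c d) (/ Rabs (a * d - b * c)).
Proof.
  intros H. unfold good2.
  assert (h1 : forall S S' s, cover_sum2 S s -> (forall x, S' x -> S x) -> cover_sum2 S' s).
  { intros S S' s Hs Hm. exact (cov_mono box2 pt box2_vol in_box2 S S' s Hs Hm). }
  assert (h2 : forall S s, cover_sum2 S s -> 0 <= s).
  { intros S s Hs. exact (cov_nonneg box2 pt box2_vol in_box2 box2_vol_nn S s Hs). }
  assert (h3 : forall (g1 g2 : pt -> pt) x, (fun g : pt -> pt => g) (fun y => g1 (g2 y)) x = (fun g : pt -> pt => g) g1 ((fun g : pt -> pt => g) g2 x)) by reflexivity.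
  assert (h4 : forall (g1 g2 : pt -> pt) x, (forall y, g1 y = g2 y) -> (fun g : pt -> pt => g) g1 x = (fun g : pt -> pt => g) g2 x).
  { intros g1 g2 x Hg. apply Hg. }
  apply (good_lin cover_sum2 (fun g => g) h1 h2 h3 h4).
  - apply RP2_good2. lra. apply RP2_sw.
  - intros a0 b0 Ha Hb. apply RP2_good2. apply Rlt_le, Rinv_0_lt_compat; apply Rmult_lt_0_compat; apply Rabs_pos_lt; auto.
    apply RP2_dg; auto.
  - intros c0. apply RP2_good2. lra. apply RP2_ushear.
  - auto.
Qed.

Lemma good3_lin a b c d : a * d - b * c <> 0 -> good3 (lin a b c d) (/ Rabs (a * d - b * c)).
Proof.
  intros H. unfold good3.
  assert (h1 : forall S S' s, cover_sum3 S s -> (forall x, S' x -> S x) -> cover_sum3 S' s).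
  { intros S S' s Hs Hm. exact (cov_mono box3 (pt * R) box3_vol in_box3 S S' s Hs Hm). }
  assert (h2 : forall S s, cover_sum3 S s -> 0 <= s).
  { intros S s Hs. exact (cov_nonneg box3 (pt * R) box3_vol in_box3 box3_vol_nn S s Hs). }
  assert (h3 : forall (g1 g2 : pt -> pt) x, lift3 (fun y => g1 (g2 y)) x = lift3 g1 (lift3 g2 x)) by reflexivity.
  assert (h4 : forall (g1 g2 : pt -> pt) x, (forall y, g1 y = g2 y) -> lift3 g1 x = lift3 g2 x).
  { intros g1 g2 x Hg. unfold lift3. rewrite Hg. auto. }
  apply (good_lin cover_sum3 lift3 h1 h2 h3 h4).
  - apply RP2_good3. lra. apply RP2_sw.
  - intros a0 b0 Ha Hb. apply RP2_good3. apply Rlt_le, Rinv_0_lt_compat; apply Rmult_lt_0_compat; apply Rabs_pos_lt; auto.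
    apply RP2_dg; auto.
  - intros c0. apply RP2_good3. lra. apply RP2_ushear.
  - auto.
Qed.

Ltac peq := unfold padd, pscal, popp, porig; simpl; f_equal; field.

Lemma pn_ge1 u w : Rabs u <= pnorm (u, w).
Proof. unfold pnorm; simpl. rewrite <- sqrt_Rsqr_abs. apply sqrt_le_1_alt. unfold Rsqr. nra. Qed.
Lemma pn_ge2 u w : Rabs w <= pnorm (u, w).
Proof. unfold pnorm; simpl. rewrite <- sqrt_Rsqr_abs. apply sqrt_le_1_alt. unfold Rsqr. nra. Qed.
Lemma pn_le u w : pnorm (u, w) <= Rabs u + Rabs w.
Proof.
  unfold pnorm; simpl. assert (H : 0 <= Rabs u + Rabs w) by (specialize (Rabs_pos u); specialize (Rabs_pos w); lra).
  rewrite <- (sqrt_Rsqr (Rabs u + Rabs w)) by auto. apply sqrt_le_1_alt. unfold Rsqr.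
  assert (u * u = Rabs u * Rabs u) by (rewrite <- Rabs_mult; rewrite Rabs_right; nra).
  assert (w * w = Rabs w * Rabs w) by (rewrite <- Rabs_mult; rewrite Rabs_right; nra).
  specialize (Rabs_pos u); specialize (Rabs_pos w). nra.
Qed.

Lemma pdist_coord q p : Rabs (fst q - fst p) <= pdist q p /\ Rabs (snd q - snd p) <= pdist q p.
Proof.
  destruct q as [q1 q2], p as [p1 p2]. unfold pdist, padd, popp, pscal; simpl.
  replace (q1 + -1 * p1) with (q1 - p1) by ring. replace (q2 + -1 * p2) with (q2 - p2) by ring.
  split. apply pn_ge1. apply pn_ge2.
Qed.

Lemma pdist_le q p : pdist q p <= Rabs (fst q - fst p) + Rabs (snd q - snd p).
Proof.
  destruct q as [q1 q2], p as [p1 p2]. unfold pdist, padd, popp, pscal; simpl.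
  replace (q1 + -1 * p1) with (q1 - p1) by ring. replace (q2 + -1 * p2) with (q2 - p2) by ring.
  apply pn_le.
Qed.

Lemma pdist_move a v s r : 0 < r -> Rabs s * (Rabs (fst v) + Rabs (snd v) + 1) <= r / 2 ->
  pdist (padd a (pscal s v)) a < r.
Proof.
  intros Hr H. eapply Rle_lt_trans. apply pdist_le.
  destruct a as [a1 a2], v as [v1 v2]. unfold padd, pscal; simpl in *.
  replace (a1 + s * v1 - a1) with (s * v1) by ring. replace (a2 + s * v2 - a2) with (s * v2) by ring.
  rewrite !Rabs_mult. specialize (Rabs_pos s). lra.
Qed.

Lemma Rabs_small_bound (v1 v2 r : R) : 0 < r -> exists s0, 0 < s0 /\ forall s, Rabs s <= s0 -> Rabs s * (Rabs v1 + Rabs v2 + 1) <= r / 2.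
Proof.
  intros Hr. set (k := Rabs v1 + Rabs v2 + 1).
  assert (Hk : 0 < k) by (unfold k; specialize (Rabs_pos v1); specialize (Rabs_pos v2); lra).
  exists (r / (2 * k)). split. apply Rdiv_lt_0_compat; lra.
  intros s0 Hs. replace (r / 2) with (r / (2 * k) * k) by (field; lra).
  apply Rmult_le_compat_r; lra.
Qed.

Section ConvexK.
Variable K : pt -> Prop.
Hypothesis Kopen : is_open K.
Hypothesis Kconv : is_convex K.

Lemma close_comb y c t : closure K y -> K c -> 0 < t <= 1 -> K (padd (pscal (1 - t) y) (pscal t c)).
Proof.
  intros Hy Hc Ht.
  destruct (Req_dec t 1) as [->|Ht1].
  { replace (padd (pscal (1 - 1) y) (pscal 1 c)) with c by (destruct y, c; peq). auto. }
  destruct (Kopen c Hc) as [r [Hr Hball]].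
  set (kk := (1 - t) / t).
  assert (Hkk : 0 < kk) by (unfold kk; apply Rdiv_lt_0_compat; lra).
  set (dl := r * t / (4 * (1 - t))).
  assert (Hdl : 0 < dl) by (unfold dl; apply Rdiv_lt_0_compat; nra).
  destruct (Hy dl Hdl) as [q [Hq Hqy]].
  destruct (pdist_coord q y) as [h1 h2].
  destruct y as [y1 y2], q as [q1 q2], c as [c1 c2]. simpl in h1, h2.
  set (c' := (c1 + kk * (y1 - q1), c2 + kk * (y2 - q2))).
  assert (Hc' : K c').
  { apply Hball. eapply Rle_lt_trans. apply pdist_le. unfold c'; simpl.
    replace (c1 + kk * (y1 - q1) - c1) with (kk * (y1 - q1)) by ring.
    replace (c2 + kk * (y2 - q2) - c2) with (kk * (y2 - q2)) by ring.
    rewrite !Rabs_mult. rewrite (Rabs_right kk) by lra.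
    rewrite <- (Rabs_Ropp (y1 - q1)), <- (Rabs_Ropp (y2 - q2)).
    replace (- (y1 - q1)) with (q1 - y1) by ring. replace (- (y2 - q2)) with (q2 - y2) by ring.
    assert (kk * dl = r / 4) by (unfold kk, dl; field; lra).
    nra. }
  assert (E : padd (pscal (1 - t) (y1, y2)) (pscal t (c1, c2)) = padd (pscal (1 - t) (q1, q2)) (pscal t c')).
  { unfold c', kk. peq; lra. }
  rewrite E. apply Kconv; auto. lra.
Qed.

Lemma boundary_not_zero u : K porig -> boundary K u -> u <> porig.
Proof. intros H0 [_ Hu] E. subst. auto. Qed.

Lemma ray_unique u w l : K porig -> boundary K u -> boundary K w -> u = pscal l w -> 0 < l -> l = 1.
Proof.
  intros H0 Hu Hw E Hl.
  destruct (Rtotal_order l 1) as [h|[h|h]]; auto; exfalso.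
  - apply (proj2 Hu). replace u with (padd (pscal (1 - (1 - l)) w) (pscal (1 - l) porig)).
    apply close_comb; auto. apply Hw. lra.
    subst. destruct w; peq.
  - apply (proj2 Hw). replace w with (padd (pscal (1 - (1 - / l)) u) (pscal (1 - / l) porig)).
    apply close_comb; auto. apply Hu.
    assert (0 < / l < 1). { split. apply Rinv_0_lt_compat; lra. rewrite <- Rinv_1. apply Rinv_lt_contravar; lra. }
    lra.
    subst. destruct w; peq; lra.
Qed.

Lemma dist_formula z X : K porig -> boundary K z -> boundary K (popp z) -> 0 < X < 1 ->
  forall d, hilbert_dist K porig (pscal X z) d <-> d = / 2 * ln ((1 + X) / (1 - X)).
Proof.
  intros H0 Hz Hmz HX d. split.
  - intros [[E _]|[_ [a [b [s [t [Ha [Hb [Hs [Hst [Ht1 [Ea [Eb Ed]]]]]]]]]]]]].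
    + exfalso. apply (boundary_not_zero z H0 Hz). destruct z as [z1 z2]. unfold pscal, porig in E.
      injection E as E1 E2. symmetry in E1, E2. apply Rmult_integral in E1. apply Rmult_integral in E2.
      destruct E1; [lra|]; destruct E2; [lra|]. subst; auto.
    + destruct a as [a1 a2], b as [b1 b2], z as [z1 z2].
      unfold porig, padd, pscal in Ea, Eb. simpl in Ea, Eb.
      injection Ea as Ea1 Ea2. injection Eb as Eb1 Eb2.
      assert (Ha1 : a1 = - (s / (1 - s)) * b1).
      { apply Rmult_eq_reg_l with (1 - s). 2: lra.
        replace ((1 - s) * (- (s / (1 - s)) * b1)) with (- s * b1) by (field; lra). lra. }
      assert (Ha2 : a2 = - (s / (1 - s)) * b2).
      { apply Rmult_eq_reg_l with (1 - s). 2: lra.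
        replace ((1 - s) * (- (s / (1 - s)) * b2)) with (- s * b2) by (field; lra). lra. }
      set (mu := (t - s) / (1 - s)).
      assert (Hmu : 0 < mu) by (unfold mu; apply Rdiv_lt_0_compat; lra).
      assert (Eb1' : X * z1 = mu * b1) by (rewrite Eb1, Ha1; unfold mu; field; lra).
      assert (Eb2' : X * z2 = mu * b2) by (rewrite Eb2, Ha2; unfold mu; field; lra).
      assert (Hl : X / mu = 1).
      { apply (ray_unique (b1, b2) (z1, z2)); auto.
        unfold pscal; simpl. f_equal.
        apply Rmult_eq_reg_l with mu; [|lra]. rewrite <- Eb1'. field. lra.
        apply Rmult_eq_reg_l with mu; [|lra]. rewrite <- Eb2'. field. lra.
        apply Rdiv_lt_0_compat; lra. }
      assert (HmuX : mu = X).
      { apply Rmult_eq_reg_r with (/ mu). 2: apply Rinv_neq_0_compat; lra.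
        rewrite Rinv_r by lra. unfold Rdiv in Hl. lra. }
      assert (Hbz1 : b1 = z1). { apply Rmult_eq_reg_l with X. rewrite Eb1', HmuX. auto. lra. }
      assert (Hbz2 : b2 = z2). { apply Rmult_eq_reg_l with X. rewrite Eb2', HmuX. auto. lra. }
      assert (Hs2 : s / (1 - s) = 1).
      { apply (ray_unique (a1, a2) (popp (z1, z2))); auto.
        unfold popp, pscal; simpl. f_equal. rewrite Ha1, Hbz1. ring. rewrite Ha2, Hbz2. ring.
        apply Rdiv_lt_0_compat; lra. }
      assert (Hsh : s = / 2).
      { assert (s = 1 - s). { apply Rmult_eq_reg_r with (/ (1 - s)). 2: apply Rinv_neq_0_compat; lra.
          rewrite Rinv_r by lra. unfold Rdiv in Hs2. lra. } lra. }
      assert (Ht : t = (1 + X) / 2).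
      { unfold mu in HmuX. rewrite Hsh in HmuX.
        replace ((t - / 2) / (1 - / 2)) with (2 * t - 1) in HmuX by (field; lra). lra. }
      rewrite Ed, Hsh, Ht. f_equal. f_equal. field. lra.
  - intros ->. right. split.
    { intro E. apply (boundary_not_zero z H0 Hz). destruct z as [z1 z2]. unfold pscal, porig in E.
      injection E as E1 E2. symmetry in E1, E2. apply Rmult_integral in E1. apply Rmult_integral in E2.
      destruct E1; [lra|]; destruct E2; [lra|]. subst; auto. }
    exists (popp z), z, (/ 2), ((1 + X) / 2).
    refine (conj Hmz (conj Hz (conj _ (conj _ (conj _ (conj _ (conj _ _))))))); try lra.
    + destruct z; unfold popp; peq.
    + destruct z; unfold popp; peq.
    + f_equal. f_equal. field. lra.
Qed.

End ConvexK.

Lemma ray_boundary (K : pt -> Prop) (M : R) p v : is_open K -> (forall x, K x -> pnorm x <= M) ->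
  K p -> v <> porig -> exists t, 0 < t /\ boundary K (padd p (pscal t v)).
Proof.
  intros Kopen Kb Kp Hv.
  destruct p as [p1 p2], v as [v1 v2].
  set (E := fun t => 0 <= t /\ K (padd (p1, p2) (pscal t (v1, v2)))).
  assert (HE0 : E 0). { split. lra. replace (padd (p1, p2) (pscal 0 (v1, v2))) with (p1, p2) by peq. auto. }
  assert (Hbd : bound E).
  { assert (Hv' : v1 <> 0 \/ v2 <> 0).
    { destruct (Req_dec v1 0); destruct (Req_dec v2 0); auto. subst. exfalso. apply Hv. auto. }
    destruct Hv' as [h|h].
    - exists ((M + Rabs p1) / Rabs v1). intros t [Ht Hk]. apply Kb in Hk.
      unfold padd, pscal in Hk; simpl in Hk.
      assert (H1 := pn_ge1 (p1 + t * v1) (p2 + t * v2)).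
      assert (Rabs (t * v1) <= Rabs (p1 + t * v1) + Rabs p1).
      { unfold Rabs; repeat destruct Rcase_abs; lra. }
      rewrite Rabs_mult, (Rabs_right t) in H by lra.
      assert (0 < Rabs v1) by (apply Rabs_pos_lt; auto).
      apply Rmult_le_reg_r with (Rabs v1); auto. unfold Rdiv. rewrite Rmult_assoc, Rinv_l by lra. lra.
    - exists ((M + Rabs p2) / Rabs v2). intros t [Ht Hk]. apply Kb in Hk.
      unfold padd, pscal in Hk; simpl in Hk.
      assert (H1 := pn_ge2 (p1 + t * v1) (p2 + t * v2)).
      assert (Rabs (t * v2) <= Rabs (p2 + t * v2) + Rabs p2).
      { unfold Rabs; repeat destruct Rcase_abs; lra. }
      rewrite Rabs_mult, (Rabs_right t) in H by lra.
      assert (0 < Rabs v2) by (apply Rabs_pos_lt; auto).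
      apply Rmult_le_reg_r with (Rabs v2); auto. unfold Rdiv. rewrite Rmult_assoc, Rinv_l by lra. lra. }
  destruct (completeness E Hbd (ex_intro _ 0 HE0)) as [m [Hub Hlub]].
  assert (Hm0 : 0 <= m) by (apply Hub; auto).
  set (kv := Rabs v1 + Rabs v2 + 1).
  assert (Hkv : 0 < kv) by (unfold kv; specialize (Rabs_pos v1); specialize (Rabs_pos v2); lra).
  assert (Hmove : forall a s r, 0 < r -> Rabs s <= r / (2 * kv) -> pdist (padd a (pscal s (v1, v2))) a < r).
  { intros a s r Hr Hs. apply pdist_move; auto. simpl. fold kv.
    replace (r / 2) with (r / (2 * kv) * kv) by (field; lra). apply Rmult_le_compat_r; lra. }
  assert (Hshift : forall s, padd (p1, p2) (pscal s (v1, v2)) = padd (padd (p1, p2) (pscal m (v1, v2))) (pscal (s - m) (v1, v2))).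
  { intros s. peq. }
  exists m. split.
  - destruct (Kopen _ Kp) as [r [Hr Hball]].
    set (t0 := r / (2 * kv)).
    assert (Ht0 : 0 < t0) by (unfold t0; apply Rdiv_lt_0_compat; lra).
    assert (E t0). { split. lra. apply Hball. apply Hmove. auto. rewrite Rabs_right by lra; unfold t0; lra. }
    specialize (Hub t0 H). lra.
  - split.
    + intros e He. set (dl := e / (2 * kv)).
      assert (Hdl : 0 < dl) by (unfold dl; apply Rdiv_lt_0_compat; lra).
      destruct (Classical_Prop.classic (exists t, E t /\ m - dl < t)) as [[t [Et Ht]]|hno].
      * exists (padd (p1, p2) (pscal t (v1, v2))). split. apply Et.
        rewrite Hshift. apply Hmove. auto. assert (t <= m) by (apply Hub; auto).
        rewrite Rabs_left1 by lra. unfold dl in Ht. lra.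
      * exfalso. assert (m <= m - dl). { apply Hlub. intros t Et. destruct (Rle_dec t (m - dl)); auto.
          exfalso. apply hno. exists t. split; auto. lra. } lra.
    + intro Hk. destruct (Kopen _ Hk) as [r [Hr Hball]].
      set (t1 := m + r / (2 * kv)).
      assert (E t1).
      { split. assert (0 < r / (2 * kv)) by (apply Rdiv_lt_0_compat; lra). unfold t1; lra.
        apply Hball. rewrite Hshift. apply Hmove. auto. unfold t1.
        replace (m + r / (2 * kv) - m) with (r / (2 * kv)) by ring.
        assert (0 < r / (2 * kv)) by (apply Rdiv_lt_0_compat; lra). rewrite Rabs_right; lra. }
      specialize (Hub t1 H). assert (0 < r / (2 * kv)) by (apply Rdiv_lt_0_compat; lra). unfold t1 in Hub. lra.
Qed.

Lemma Rabs_le_inv a b : Rabs a <= b -> - b <= a <= b.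
Proof. unfold Rabs; destruct Rcase_abs; intros; lra. Qed.

Section Main.
Variables (C : pt -> Prop) (P Q : pt).
Hypotheses (hopen : is_open C) (hbdd : is_bounded C) (hconv : is_convex C)
  (h0 : C porig) (hPQ : P <> Q)
  (hseg1 : forall x, segment P Q x -> boundary C x)
  (hseg2 : forall x, segment (popp P) (popp Q) x -> boundary C x).

Let p1 := fst P. Let p2 := snd P. Let q1 := fst Q. Let q2 := snd Q.
Let D := p1 * q2 - p2 * q1.

Lemma P_eq : P = (p1, p2). Proof. destruct P; auto. Qed.
Lemma Q_eq : Q = (q1, q2). Proof. destruct Q; auto. Qed.

Lemma segP : segment P Q P.
Proof. exists 0. split. lra. destruct P, Q; peq. Qed.
Lemma segQ : segment P Q Q.
Proof. exists 1. split. lra. destruct P, Q; peq. Qed.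

Lemma D_nz : D <> 0.
Proof.
  intro HD.
  assert (HP0 : P <> porig). { intro E. apply (proj2 (hseg1 P segP)). rewrite E. auto. }
  assert (Hl : exists l, Q = pscal l P).
  { destruct (Req_dec p1 0) as [h1|h1].
    - assert (h2 : p2 <> 0). { intro. apply HP0. rewrite P_eq. fold p1 p2. rewrite h1, H. auto. }
      assert (q1 = 0). { unfold D in HD. rewrite h1 in HD. assert (Hq : p2 * q1 = 0) by lra.
        apply Rmult_integral in Hq. lra. }
      exists (q2 / p2). rewrite Q_eq, P_eq. fold p1 p2 q1 q2. unfold pscal; simpl. f_equal.
      rewrite H, h1. ring. field. auto.
    - exists (q1 / p1). rewrite Q_eq, P_eq. fold p1 p2 q1 q2. unfold pscal; simpl. f_equal.
      field. auto. unfold D in HD. apply Rmult_eq_reg_l with p1; auto.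
      replace (p1 * (q1 / p1 * p2)) with (p2 * q1) by (field; auto). lra. }
  destruct Hl as [l Hl].
  destruct (Rlt_dec 0 l) as [hl|hl].
  - assert (l = 1) by (apply (ray_unique C hopen hconv Q P l h0 (hseg1 Q segQ) (hseg1 P segP) Hl hl)).
    apply hPQ. rewrite Hl, H. destruct P; peq.
  - assert (h1l : 0 < 1 - l) by lra.
    assert (segment P Q porig).
    { exists (/ (1 - l)). split. split. apply Rlt_le, Rinv_0_lt_compat; auto.
      rewrite <- Rinv_1. apply Rinv_le_contravar; lra.
      rewrite Hl. destruct P; peq; lra. }
    apply (proj2 (hseg1 _ H)). auto.
Qed.

Definition Xc (x : pt) : R := (fst x * (q2 - p2) + snd x * (p1 - q1)) / D.
Definition Yc (x : pt) : R := (fst x * (- p2 - q2) + snd x * (p1 + q1)) / D.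
Definition Nm : pt -> pt := lin ((p1 + q1) / 2) ((q1 - p1) / 2) ((p2 + q2) / 2) ((q2 - p2) / 2).
Definition XYm : pt -> pt := lin ((q2 - p2) / D) ((p1 - q1) / D) ((- p2 - q2) / D) ((p1 + q1) / D).

Lemma XYm_eq x : XYm x = (Xc x, Yc x).
Proof. unfold XYm, lin, Xc, Yc. f_equal; field; apply D_nz. Qed.

Lemma Xc_N r : Xc (Nm r) = fst r.
Proof. unfold Xc, Nm, lin; simpl. unfold D. field. apply D_nz. Qed.
Lemma Yc_N r : Yc (Nm r) = snd r.
Proof. unfold Yc, Nm, lin; simpl. unfold D. field. apply D_nz. Qed.
Lemma N_XY x : Nm (Xc x, Yc x) = x.
Proof. destruct x as [x1 x2]. unfold Xc, Yc, Nm, lin; simpl. f_equal; unfold D; field; apply D_nz. Qed.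

Lemma Xc_add a b : Xc (padd a b) = Xc a + Xc b.
Proof. unfold Xc, padd; simpl. field. apply D_nz. Qed.
Lemma Yc_add a b : Yc (padd a b) = Yc a + Yc b.
Proof. unfold Yc, padd; simpl. field. apply D_nz. Qed.
Lemma Xc_scal k a : Xc (pscal k a) = k * Xc a.
Proof. unfold Xc, pscal; simpl. field. apply D_nz. Qed.
Lemma Yc_scal k a : Yc (pscal k a) = k * Yc a.
Proof. unfold Yc, pscal; simpl. field. apply D_nz. Qed.
Lemma Xc_P : Xc P = 1. Proof. unfold Xc, D, p1, p2, q1, q2. field. apply D_nz. Qed.
Lemma Yc_P : Yc P = -1. Proof. unfold Yc, D, p1, p2, q1, q2. field. apply D_nz. Qed.
Lemma Xc_Q : Xc Q = 1. Proof. unfold Xc, D, p1, p2, q1, q2. field. apply D_nz. Qed.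
Lemma Yc_Q : Yc Q = 1. Proof. unfold Yc, D, p1, p2, q1, q2. field. apply D_nz. Qed.
Lemma Xc_0 : Xc porig = 0. Proof. unfold Xc, porig; simpl. field. apply D_nz. Qed.
Lemma Yc_0 : Yc porig = 0. Proof. unfold Yc, porig; simpl. field. apply D_nz. Qed.
Lemma Xc_opp a : Xc (popp a) = - Xc a. Proof. unfold popp. rewrite Xc_scal. ring. Qed.
Lemma Yc_opp a : Yc (popp a) = - Yc a. Proof. unfold popp. rewrite Yc_scal. ring. Qed.

Lemma pt_eq_XY x y : Xc x = Xc y -> Yc x = Yc y -> x = y.
Proof. intros H1 H2. rewrite <- (N_XY x), <- (N_XY y), H1, H2. auto. Qed.

Definition T := open_hull4 P Q (popp P) (popp Q).

Lemma T_char x : T x <-> Rabs (Xc x) < 1 /\ Rabs (Yc x) < 1.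
Proof.
  split.
  - intros [l1 [l2 [l3 [l4 [H1 [H2 [H3 [H4 [Hs E]]]]]]]]].
    rewrite E. rewrite !Xc_add, !Yc_add, !Xc_scal, !Yc_scal, !Xc_opp, !Yc_opp, Xc_P, Xc_Q, Yc_P, Yc_Q.
    split; unfold Rabs; destruct Rcase_abs; lra.
  - intros [hX hY]. set (X := Xc x). set (Y := Yc x).
    assert (hX' : -1 < X < 1) by (apply Rabs_def2 in hX; unfold X; lra).
    assert (hY' : -1 < Y < 1) by (apply Rabs_def2 in hY; unfold Y; lra).
    set (m := (Rmax 0 ((X - Y) / 2) + Rmin ((1 + X) / 2) ((1 - Y) / 2)) / 2).
    assert (Hm1 : 0 < m /\ (X - Y) / 2 < m /\ m < (1 + X) / 2 /\ m < (1 - Y) / 2).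
    { unfold m, Rmax, Rmin. destruct (Rle_dec 0 ((X - Y) / 2)); destruct (Rle_dec ((1 + X) / 2) ((1 - Y) / 2)); lra. }
    exists m, ((1 + X) / 2 - m), ((Y - X) / 2 + m), ((1 - Y) / 2 - m).
    repeat split; try lra.
    apply pt_eq_XY.
    + rewrite !Xc_add, !Xc_scal, !Xc_opp, Xc_P, Xc_Q. fold X. field.
    + rewrite !Yc_add, !Yc_scal, !Yc_opp, Yc_P, Yc_Q. fold Y. field.
Qed.

Lemma abs_coord_bound x : Rabs (Xc x) <= (Rabs ((q2 - p2) / D) + Rabs ((p1 - q1) / D)) * pnorm x /\
                          Rabs (Yc x) <= (Rabs ((- p2 - q2) / D) + Rabs ((p1 + q1) / D)) * pnorm x.
Proof.
  destruct x as [x1 x2].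
  assert (E1 : Xc (x1, x2) = x1 * ((q2 - p2) / D) + x2 * ((p1 - q1) / D)) by (unfold Xc; simpl; field; apply D_nz).
  assert (E2 : Yc (x1, x2) = x1 * ((- p2 - q2) / D) + x2 * ((p1 + q1) / D)) by (unfold Yc; simpl; field; apply D_nz).
  assert (B1 := pn_ge1 x1 x2). assert (B2 := pn_ge2 x1 x2).
  specialize (Rabs_pos ((q2 - p2) / D)). specialize (Rabs_pos ((p1 - q1) / D)).
  specialize (Rabs_pos ((- p2 - q2) / D)). specialize (Rabs_pos ((p1 + q1) / D)). intros.
  rewrite E1, E2. split; eapply Rle_trans; try apply Rabs_triang; rewrite !Rabs_mult; nra.
Qed.

Lemma T_open : is_open T.
Proof.
  intros x Hx. apply T_char in Hx. destruct Hx as [hX hY].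
  set (k1 := Rabs ((q2 - p2) / D) + Rabs ((p1 - q1) / D)).
  set (k2 := Rabs ((- p2 - q2) / D) + Rabs ((p1 + q1) / D)).
  assert (Hk1 : 0 <= k1) by (unfold k1; specialize (Rabs_pos ((q2 - p2) / D)); specialize (Rabs_pos ((p1 - q1) / D)); lra).
  assert (Hk2 : 0 <= k2) by (unfold k2; specialize (Rabs_pos ((- p2 - q2) / D)); specialize (Rabs_pos ((p1 + q1) / D)); lra).
  set (k := k1 + k2 + 1).
  set (e := Rmin (1 - Rabs (Xc x)) (1 - Rabs (Yc x)) / k).
  assert (He : 0 < e). { unfold e. apply Rdiv_lt_0_compat. unfold Rmin; destruct Rle_dec; lra. unfold k; lra. }
  exists e. split; auto. intros q Hq. apply T_char.
  assert (Eq : q = padd x (padd q (popp x))) by (destruct q, x; peq).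
  destruct (abs_coord_bound (padd q (popp x))) as [B1 B2]. fold k1 in B1. fold k2 in B2.
  fold (pdist q x) in B1, B2.
  assert (Hpd : 0 <= pdist q x) by (unfold pdist, pnorm; apply sqrt_pos).
  assert (Hke : k * e = Rmin (1 - Rabs (Xc x)) (1 - Rabs (Yc x))) by (unfold e, k; field; lra).
  assert (Hm1 : Rmin (1 - Rabs (Xc x)) (1 - Rabs (Yc x)) <= 1 - Rabs (Xc x)) by apply Rmin_l.
  assert (Hm2 : Rmin (1 - Rabs (Xc x)) (1 - Rabs (Yc x)) <= 1 - Rabs (Yc x)) by apply Rmin_r.
  rewrite Eq, Xc_add, Yc_add. split.
  - eapply Rle_lt_trans. apply Rabs_triang.
    assert (k1 * pdist q x <= k * pdist q x) by (apply Rmult_le_compat_r; unfold k; lra).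
    assert (k * pdist q x < k * e) by (apply Rmult_lt_compat_l; unfold k; lra). lra.
  - eapply Rle_lt_trans. apply Rabs_triang.
    assert (k2 * pdist q x <= k * pdist q x) by (apply Rmult_le_compat_r; unfold k; lra).
    assert (k * pdist q x < k * e) by (apply Rmult_lt_compat_l; unfold k; lra). lra.
Qed.

Lemma T_conv : is_convex T.
Proof.
  intros a b t Ha Hb Ht. apply T_char in Ha, Hb. apply T_char.
  rewrite Xc_add, Yc_add, !Xc_scal, !Yc_scal.
  destruct Ha as [a1 a2], Hb as [b1 b2].
  split; eapply Rle_lt_trans; try apply Rabs_triang; rewrite !Rabs_mult, (Rabs_right t), (Rabs_right (1 - t)) by lra;
    destruct (Req_dec t 0); try (subst; lra); nra.
Qed.

Lemma seg1_of z : Xc z = 1 -> Rabs (Yc z) <= 1 -> segment P Q z.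
Proof.
  intros H1 H2. apply Rabs_le_inv in H2. exists ((1 + Yc z) / 2). split. lra.
  apply pt_eq_XY.
  - rewrite Xc_add, !Xc_scal, Xc_P, Xc_Q, H1. field.
  - rewrite Yc_add, !Yc_scal, Yc_P, Yc_Q. field.
Qed.

Lemma seg2_of z : Xc z = -1 -> Rabs (Yc z) <= 1 -> segment (popp P) (popp Q) z.
Proof.
  intros H1 H2. apply Rabs_le_inv in H2. exists ((1 - Yc z) / 2). split. lra.
  apply pt_eq_XY.
  - rewrite Xc_add, !Xc_scal, !Xc_opp, Xc_P, Xc_Q, H1. field.
  - rewrite Yc_add, !Yc_scal, !Yc_opp, Yc_P, Yc_Q. field.
Qed.

Lemma div_bounds a b : 0 < b -> -b < a < b -> -1 < a / b < 1.
Proof. intros Hb H. split; apply Rmult_lt_reg_r with b; auto; replace (a / b * b) with a by (field; lra); lra. Qed.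

Lemma T_sub_C x : T x -> C x.
Proof.
  intro Hx. apply T_char in Hx. destruct Hx as [hX hY].
  set (X := Xc x) in *. set (Y := Yc x) in *.
  set (mm := Rmax (Rabs X) (Rabs Y)).
  assert (HmX : Rabs X <= mm) by apply Rmax_l. assert (HmY : Rabs Y <= mm) by apply Rmax_r.
  assert (Hmm : 0 <= mm < 1) by (unfold mm, Rmax; destruct Rle_dec; specialize (Rabs_pos X); specialize (Rabs_pos Y); lra).
  set (t := (1 - mm) / 2).
  assert (Ht : 0 < t <= 1) by (unfold t; lra).
  set (X' := X / (1 - t)). set (Y' := Y / (1 - t)).
  assert (HX' : -1 < X' < 1).
  { unfold X'. apply div_bounds. unfold t; lra. assert (h: Rabs X < 1 - t) by (unfold t; lra). apply Rabs_def2 in h. lra. }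
  assert (HY' : -1 < Y' < 1).
  { unfold Y'. apply div_bounds. unfold t; lra. assert (h: Rabs Y < 1 - t) by (unfold t; lra). apply Rabs_def2 in h. lra. }
  set (z1 := Nm (1, Y')). set (z2 := Nm (-1, Y')).
  assert (Bz1 : boundary C z1).
  { apply hseg1. apply seg1_of. unfold z1; rewrite Xc_N; auto. unfold z1; rewrite Yc_N; simpl.
    apply Rabs_le. lra. }
  assert (Bz2 : boundary C z2).
  { apply hseg2. apply seg2_of. unfold z2; rewrite Xc_N; auto. unfold z2; rewrite Yc_N; simpl.
    apply Rabs_le. lra. }
  assert (Cw1 : C (padd (pscal (1 - t) z1) (pscal t porig))) by (apply close_comb; auto; apply Bz1).
  assert (Cw2 : C (padd (pscal (1 - t) z2) (pscal t porig))) by (apply close_comb; auto; apply Bz2).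
  set (mu := (1 + X') / 2).
  assert (Hmu : 0 <= mu <= 1) by (unfold mu; lra).
  assert (E : x = padd (pscal (1 - mu) (padd (pscal (1 - t) z2) (pscal t porig))) (pscal mu (padd (pscal (1 - t) z1) (pscal t porig)))).
  { apply pt_eq_XY.
    - rewrite !Xc_add, !Xc_scal, !Xc_add, !Xc_scal, Xc_0. unfold z1, z2. rewrite !Xc_N. simpl.
      fold X. unfold mu, X'. field. unfold t; lra.
    - rewrite !Yc_add, !Yc_scal, !Yc_add, !Yc_scal, Yc_0. unfold z1, z2. rewrite !Yc_N. simpl.
      fold Y. unfold Y'. field. unfold t; lra. }
  rewrite E. apply hconv; auto.
Qed.

Lemma tri_coords x : open_hull3 P porig Q x -> 0 < Xc x < 1 /\ Rabs (Yc x) < Xc x.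
Proof.
  intros [l1 [l2 [l3 [H1 [H2 [H3 [Hs E]]]]]]].
  assert (EX : Xc x = l1 + l3) by (rewrite E, !Xc_add, !Xc_scal, Xc_P, Xc_Q, Xc_0; ring).
  assert (EY : Yc x = l3 - l1) by (rewrite E, !Yc_add, !Yc_scal, Yc_P, Yc_Q, Yc_0; ring).
  rewrite EX, EY. split. lra. apply Rabs_def1; lra.
Qed.

Lemma bdT z : Rabs (Xc z) = 1 -> Rabs (Yc z) < 1 -> boundary T z.
Proof.
  intros H1 H2. split.
  - intros e He. destruct (Rabs_small_bound (fst z) (snd z) e He) as [s0 [Hs0 Hs0b]].
    set (s := Rmin s0 (1/2)).
    assert (Hs : 0 < s <= s0 /\ s <= 1/2) by (unfold s, Rmin; destruct Rle_dec; lra).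
    exists (padd z (pscal (- s) z)). split.
    + apply T_char. rewrite Xc_add, Yc_add, !Xc_scal, !Yc_scal.
      replace (Xc z + - s * Xc z) with ((1 - s) * Xc z) by ring.
      replace (Yc z + - s * Yc z) with ((1 - s) * Yc z) by ring.
      rewrite !Rabs_mult, (Rabs_right (1 - s)) by lra. rewrite H1. split. lra.
      specialize (Rabs_pos (Yc z)). nra.
    + apply pdist_move. auto. apply Hs0b. rewrite Rabs_Ropp, Rabs_right; lra.
  - intro HT. apply T_char in HT. lra.
Qed.

Lemma tri_z x : open_hull3 P porig Q x ->
  let z := pscal (/ Xc x) x in
  x = pscal (Xc x) z /\ Xc z = 1 /\ Rabs (Yc z) < 1.
Proof.
  intros Hx z. destruct (tri_coords x Hx) as [[hX1 hX2] hY].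
  split; [|split].
  - unfold z. destruct x; peq; lra.
  - unfold z. rewrite Xc_scal. field. lra.
  - unfold z. rewrite Yc_scal. rewrite Rabs_mult. rewrite Rabs_right.
    2: { apply Rle_ge, Rlt_le, Rinv_0_lt_compat; lra. }
    apply Rmult_lt_reg_l with (Xc x); auto. rewrite <- Rmult_assoc, Rinv_r by lra. lra.
Qed.

Lemma ball_char (K : pt -> Prop) x Rad : is_open K -> is_convex K -> K porig -> K x ->
  open_hull3 P porig Q x ->
  (forall z, Xc z = 1 -> Rabs (Yc z) < 1 -> boundary K z /\ boundary K (popp z)) ->
  (hilbert_ball K Rad x <-> / 2 * ln ((1 + Xc x) / (1 - Xc x)) < Rad).
Proof.
  intros Ko Kc K0 Kx Hx Hb.
  destruct (tri_z x Hx) as [Ex [Hz1 Hz2]].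
  set (z := pscal (/ Xc x) x) in *.
  destruct (Hb z Hz1 Hz2) as [Bz Bmz].
  destruct (tri_coords x Hx) as [HX _].
  assert (F := dist_formula K Ko Kc z (Xc x) K0 Bz Bmz HX).
  split.
  - intros [_ [d [Hd Hdr]]]. rewrite Ex in Hd. apply F in Hd. lra.
  - intros H. split; auto. exists (/ 2 * ln ((1 + Xc x) / (1 - Xc x))). split; auto.
    rewrite Ex at 1. apply F. auto.
Qed.

Lemma bd_C z : Xc z = 1 -> Rabs (Yc z) < 1 -> boundary C z /\ boundary C (popp z).
Proof.
  intros H1 H2. split.
  - apply hseg1, seg1_of; auto; lra.
  - apply hseg2, seg2_of. rewrite Xc_opp; lra. rewrite Yc_opp, Rabs_Ropp; lra.
Qed.

Lemma bd_T z : Xc z = 1 -> Rabs (Yc z) < 1 -> boundary T z /\ boundary T (popp z).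
Proof.
  intros H1 H2. split.
  - apply bdT. rewrite H1, Rabs_R1. auto. auto.
  - apply bdT. rewrite Xc_opp, Rabs_Ropp, H1, Rabs_R1. auto. rewrite Yc_opp, Rabs_Ropp. auto.
Qed.

Lemma T0 : T porig.
Proof. apply T_char. rewrite Xc_0, Yc_0, Rabs_R0. lra. Qed.

Lemma tri_T x : open_hull3 P porig Q x -> T x.
Proof. intros Hx. destruct (tri_coords x Hx) as [[h1 h2] h3]. apply T_char. split.
  rewrite Rabs_right; lra. apply Rabs_def2 in h3. apply Rabs_def1; lra. Qed.

Lemma part1 Rad x : (hilbert_ball C Rad x /\ open_hull3 P porig Q x) <->
     (hilbert_ball T Rad x /\ open_hull3 P porig Q x).
Proof.
  split.
  - intros [H1 H2]. split; auto.
    apply (ball_char T x Rad T_open T_conv T0 (tri_T x H2) H2 bd_T).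
    apply (ball_char C x Rad hopen hconv h0 (T_sub_C x (tri_T x H2)) H2 bd_C). auto.
  - intros [H1 H2]. split; auto.
    apply (ball_char C x Rad hopen hconv h0 (T_sub_C x (tri_T x H2)) H2 bd_C).
    apply (ball_char T x Rad T_open T_conv T0 (tri_T x H2) H2 bd_T). auto.
Qed.

Lemma clos_bound : exists M, 0 <= M /\ (forall x, C x -> pnorm x <= M) /\
  (forall y, closure C y -> Rabs (fst y) <= M /\ Rabs (snd y) <= M).
Proof.
  destruct hbdd as [M HM]. exists M. 
  assert (HM0 : 0 <= M) by (specialize (HM porig h0); unfold pnorm in HM; specialize (sqrt_pos (fst porig ^ 2 + snd porig ^ 2)); lra).
  split; auto. split; auto.
  intros [y1 y2] Hy. split.
  - apply Rnot_lt_le. intro Hlt. simpl in Hlt. assert (he : 0 < Rabs y1 - M) by lra. destruct (Hy _ he) as [q [Hq Hd]].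
    destruct (pdist_coord q (y1, y2)) as [h1 _]. simpl in h1.
    specialize (HM q Hq). destruct q as [a b]. specialize (pn_ge1 a b). simpl in h1.
    assert (Rabs y1 <= Rabs a + Rabs (a - y1)) by (unfold Rabs; repeat destruct Rcase_abs; lra). lra.
  - apply Rnot_lt_le. intro Hlt. simpl in Hlt. assert (he : 0 < Rabs y2 - M) by lra. destruct (Hy _ he) as [q [Hq Hd]].
    destruct (pdist_coord q (y1, y2)) as [_ h1]. simpl in h1.
    specialize (HM q Hq). destruct q as [a b]. specialize (pn_ge2 a b). simpl in h1.
    assert (Rabs y2 <= Rabs b + Rabs (b - y2)) by (unfold Rabs; repeat destruct Rcase_abs; lra). lra.
Qed.

Lemma inv_lt_1 t : 1 < t -> / t < 1.
Proof. intros. rewrite <- Rinv_1. apply Rinv_lt_contravar; lra. Qed.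

Lemma fball_of p v : C p -> C (padd p v) -> C (padd p (popp v)) -> finsler_ball C p v.
Proof.
  intros Cp Cpv Cmv. destruct clos_bound as [M [HM0 [HM _]]].
  destruct (Classical_Prop.classic (v = porig)) as [Hv|Hv].
  { exists 0. split. left; auto. lra. }
  destruct (ray_boundary C M p v hopen HM Cp Hv) as [tp [Htp Btp]].
  assert (Hv' : popp v <> porig). { intro E. apply Hv. destruct v; unfold popp, pscal, porig in *; simpl in *.
    injection E as E1 E2. f_equal; lra. }
  destruct (ray_boundary C M p (popp v) hopen HM Cp Hv') as [tm [Htm Btm]].
  assert (Em : padd p (pscal tm (popp v)) = padd p (pscal (- tm) v)) by (destruct p, v; unfold popp; peq).
  rewrite Em in Btm.
  assert (Htp1 : 1 < tp).
  { apply Rnot_le_lt. intro h. apply (proj2 Btp).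
    replace (padd p (pscal tp v)) with (padd (pscal (1 - tp) p) (pscal tp (padd p v))) by (destruct p, v; peq).
    apply hconv; auto; lra. }
  assert (Htm1 : 1 < tm).
  { apply Rnot_le_lt. intro h. apply (proj2 Btm).
    replace (padd p (pscal (- tm) v)) with (padd (pscal (1 - tm) p) (pscal tm (padd p (popp v)))) by (destruct p, v; unfold popp; peq).
    apply hconv; auto; lra. }
  exists (/ 2 * (/ tm + / tp)). split.
  - right. split; auto. exists tm, tp. repeat split; auto; try apply Btm; try apply Btp.
  - specialize (inv_lt_1 tm Htm1). specialize (inv_lt_1 tp Htp1). lra.
Qed.

Lemma fball_bounded M p v : 0 <= M -> (forall y, closure C y -> Rabs (fst y) <= M /\ Rabs (snd y) <= M) ->
  finsler_ball C p v -> Rabs (fst v) <= M /\ Rabs (snd v) <= M.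
Proof.
  intros HM0 HM [f [[[Hv Hf]|[Hv [tm [tp [Htm [Htp [Bm [Bp Hf]]]]]]]] Hf1]].
  - subst. unfold porig; simpl. rewrite Rabs_R0. lra.
  - assert (Hsum : 2 < tm + tp).
    { assert (E : (tm + tp) * (/ tm + / tp) = 4 + (tm - tp) ^ 2 / (tm * tp)) by (field; lra).
      assert (0 <= (tm - tp) ^ 2 / (tm * tp)) by (apply Rdiv_le_0_compat; [apply pow2_ge_0 | apply Rmult_lt_0_compat; lra]).
      assert (/ tm + / tp < 2) by (subst f; lra).
      assert (0 < / tm) by (apply Rinv_0_lt_compat; lra). assert (0 < / tp) by (apply Rinv_0_lt_compat; lra).
      nra. }
    destruct (HM _ (proj1 Bm)) as [Bm1 Bm2]. destruct (HM _ (proj1 Bp)) as [Bp1 Bp2].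
    destruct p as [a b], v as [v1 v2]. unfold padd, pscal in *; simpl in *.
    assert (E1 : (tm + tp) * Rabs v1 <= 2 * M).
    { rewrite <- (Rabs_right (tm + tp)) by lra. rewrite <- Rabs_mult.
      replace ((tm + tp) * v1) with ((a + tp * v1) - (a + - tm * v1)) by ring.
      unfold Rabs in *; repeat destruct Rcase_abs; lra. }
    assert (E2 : (tm + tp) * Rabs v2 <= 2 * M).
    { rewrite <- (Rabs_right (tm + tp)) by lra. rewrite <- Rabs_mult.
      replace ((tm + tp) * v2) with ((b + tp * v2) - (b + - tm * v2)) by ring.
      unfold Rabs in *; repeat destruct Rcase_abs; lra. }
    specialize (Rabs_pos v1). specialize (Rabs_pos v2). intros. split; nra.
Qed.

Lemma leb2_lb A m : (exists s, cover_sum2 A s) -> (forall s, cover_sum2 A s -> m <= s) -> m <= lebesgue2 A.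
Proof.
  intros [s0 Hs0] Hall.
  set (E := fun x => exists s, cover_sum2 A s /\ x = - s).
  assert (Hnn : forall s, cover_sum2 A s -> 0 <= s).
  { intros s Hs. exact (cov_nonneg box2 pt box2_vol in_box2 box2_vol_nn A s Hs). }
  destruct (completeness E) as [l [Hub Hlub]].
  { exists 0. intros x [s [Hs ->]]. specialize (Hnn s Hs). lra. }
  { exists (- s0). exists s0. auto. }
  assert (Hspec : exists m0, (forall s, cover_sum2 A s -> m0 <= s) /\
     (forall e, 0 < e -> exists s, cover_sum2 A s /\ s < m0 + e)).
  { exists (- l). split.
    - intros s Hs. assert (- s <= l) by (apply Hub; exists s; auto). lra.
    - intros e He. destruct (Classical_Prop.classic (exists s, cover_sum2 A s /\ s < - l + e)) as [h|h]; auto.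
      exfalso. assert (l <= l - e). { apply Hlub. intros x [s [Hs ->]].
        destruct (Rle_dec (- s) (l - e)); auto. exfalso. apply h. exists s. split; auto. lra. } lra. }
  assert (H := epsilon_spec (inhabits 0) _ Hspec). fold (lebesgue2 A) in H.
  destruct H as [_ H2].
  apply Rnot_lt_le. intro Hlt. destruct (H2 (m - lebesgue2 A)) as [s [Hs Hs2]]. lra.
  specialize (Hall s Hs). lra.
Qed.

Lemma le_eps a b : (forall e, 0 < e -> a <= b + e) -> a <= b.
Proof. intros H. apply Rnot_lt_le. intro h. specialize (H ((a - b) / 2)). lra. Qed.

Definition detN := ((p1 + q1) / 2) * ((q2 - p2) / 2) - ((q1 - p1) / 2) * ((p2 + q2) / 2).
Lemma detN_eq : detN = D / 2. Proof. unfold detN, D. field. Qed.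

Lemma dens_bound p : 0 < Xc p < 1 -> Rabs (Yc p) < Xc p ->
  hilbert_density C p <= PI / (2 * Rabs D * (1 - Xc p) * (1 - Rabs (Yc p))).
Proof.
  intros HX HY. set (X0 := Xc p) in *. set (Y0 := Yc p) in *.
  destruct clos_bound as [M [HM0 [HM HMc]]].
  assert (HD : 0 < Rabs D) by (apply Rabs_pos_lt; apply D_nz).
  assert (Hp : C p).
  { apply T_sub_C, T_char. split. rewrite Rabs_right; fold X0; lra. fold Y0; lra. }
  set (m := 2 * Rabs D * (1 - X0) * (1 - Rabs Y0)).
  assert (Hm : 0 < m) by (unfold m; repeat apply Rmult_lt_0_compat; lra).
  assert (Hle : m <= lebesgue2 (finsler_ball C p)).
  { apply leb2_lb.
    - destruct (cov_of_list box2 pt box2_vol in_box2 box2_vol_nn (finsler_ball C p) (Box2 (- M) M (- M) M :: nil) box0 box0_vol) as [s [Hs _]].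
      + intros v Hv. exists (Box2 (- M) M (- M) M). split. left; auto.
        destruct (fball_bounded M p v HM0 HMc Hv) as [B1 B2].
        apply Rabs_le_inv in B1. apply Rabs_le_inv in B2. split; simpl; lra.
      + exists s; auto.
    - intros s Hs. 
      assert (HdN : detN <> 0) by (rewrite detN_eq; apply Rmult_integral_contrapositive; split; [apply D_nz|lra]).
      assert (G := good2_lin _ _ _ _ HdN).
      assert (HdA : 0 < Rabs detN) by (apply Rabs_pos_lt; auto).
      assert (EdA : Rabs detN = Rabs D / 2).
      { rewrite detN_eq. unfold Rdiv. rewrite Rabs_mult, (Rabs_right (/ 2)) by lra. auto. }
      apply le_eps. intros e He.
      assert (He1 : 0 < e / Rabs detN) by (apply Rdiv_lt_0_compat; auto).
      destruct (G _ s _ Hs He1) as [s' [Hs' Hb]].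
      assert (Hrect : 2 * (1 - X0) * (2 * (1 - Rabs Y0)) <= s').
      { destruct Hs' as [c [Hc Hcv]].
        replace (2 * (1 - X0) * (2 * (1 - Rabs Y0))) with (((1 - X0) - - (1 - X0)) * ((1 - Rabs Y0) - - (1 - Rabs Y0))) by ring.
        apply (rect_mc _ _ _ _ s' c). lra. lra.
        - intros r Hr1 Hr2. apply Hc. cbv beta. fold Nm. 
          assert (Hr2' : Rabs (snd r) < 1 - Rabs Y0) by (apply Rabs_def1; lra).
          apply fball_of; auto.
          + apply T_sub_C, T_char. rewrite Xc_add, Yc_add, Xc_N, Yc_N. fold X0 Y0. split.
            apply Rabs_def1; lra. eapply Rle_lt_trans. apply Rabs_triang. lra.
          + apply T_sub_C, T_char. rewrite Xc_add, Yc_add, Xc_opp, Yc_opp, Xc_N, Yc_N. fold X0 Y0. split.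
            apply Rabs_def1; lra. eapply Rle_lt_trans. apply Rabs_triang. rewrite Rabs_Ropp. lra.
        - apply (cov_partial_le box2 box2_vol box2_vol_nn c s' Hcv). }
      assert (Hm2 : m = Rabs detN * (2 * (1 - X0) * (2 * (1 - Rabs Y0)))) by (unfold m; rewrite EdA; field).
      rewrite Hm2.
      apply Rle_trans with (Rabs detN * (/ Rabs detN * s + e / Rabs detN)).
      apply Rmult_le_compat_l. lra. fold detN in Hb. lra.
      right. field. lra. }
  unfold hilbert_density. unfold Rdiv. apply Rmult_le_compat_l. specialize PI_RGT_0; lra.
  apply Rinv_le_contravar; auto.
Qed.


Lemma ln_le_minus1 x : 0 < x -> ln x <= x - 1.
Proof. intros. specialize (exp_ineq1_le (ln x)). rewrite exp_ln by auto. lra. Qed.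

Lemma step_ln a h : 0 < h -> h < a -> h / a <= ln a - ln (a - h).
Proof.
  intros Hh Ha.
  assert (E : ln (a - h) - ln a = ln ((a - h) / a)).
  { unfold Rdiv. rewrite ln_mult, ln_Rinv by (try apply Rinv_0_lt_compat; lra). ring. }
  assert (H := ln_le_minus1 ((a - h) / a) ltac:(apply Rdiv_lt_0_compat; lra)).
  replace ((a - h) / a - 1) with (- (h / a)) in H by (field; lra). lra.
Qed.

Lemma X_lt_th X Rad : 0 < X < 1 -> / 2 * ln ((1 + X) / (1 - X)) < Rad ->
  X < (exp (2 * Rad) - 1) / (exp (2 * Rad) + 1).
Proof.
  intros HX H.
  assert (Hp : 0 < (1 + X) / (1 - X)) by (apply Rdiv_lt_0_compat; lra).
  assert (H2 : (1 + X) / (1 - X) < exp (2 * Rad)).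
  { rewrite <- (exp_ln _ Hp). apply exp_increasing. lra. }
  assert (HE : 0 < exp (2 * Rad)) by apply exp_pos.
  assert (H3 : 1 + X < exp (2 * Rad) * (1 - X)).
  { replace (1 + X) with ((1 + X) / (1 - X) * (1 - X)) by (field; lra). apply Rmult_lt_compat_r; lra. }
  apply Rmult_lt_reg_r with (exp (2 * Rad) + 1). lra.
  replace ((exp (2 * Rad) - 1) / (exp (2 * Rad) + 1) * (exp (2 * Rad) + 1)) with (exp (2 * Rad) - 1) by (field; lra).
  nra.
Qed.

Lemma lsum_flat_map {Bx : Type} (vol : Bx -> R) (F : nat -> list Bx) n :
  lsum vol (flat_map F (seq 0 n)) = rsum (fun i => lsum vol (F i)) n.
Proof.
  assert (H : forall m, lsum vol (flat_map F (seq m n)) = rsum (fun i => lsum vol (F (m + i)%nat)) n).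
  { induction n; intros m. simpl. auto. simpl (seq m (S n)). simpl flat_map.
    rewrite lsum_app, IHn. rewrite rsum_shift. rewrite Nat.add_0_r. f_equal. apply rsum_ext.
    intros i _. f_equal. f_equal. lia. }
  rewrite H. apply rsum_ext. auto.
Qed.

Definition detXY := (q2 - p2) / D * ((p1 + q1) / D) - (p1 - q1) / D * ((- p2 - q2) / D).
Lemma detXY_eq : detXY = 2 / D. Proof. unfold detXY, D. field. apply D_nz. Qed.

Lemma part2 Rad : 0 < Rad -> hilbert_measure_le C
    (fun x => hilbert_ball C Rad x /\ open_hull3 P porig Q x) (2 * PI * Rad ^ 2).
Proof.
  intros HR e He.
  set (E := exp (2 * Rad)).
  assert (HE1 : 1 < E). { unfold E. rewrite <- exp_0. apply exp_increasing. lra. }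
  set (th := (E - 1) / (E + 1)).
  assert (Hth : 0 < th < 1).
  { unfold th. split. apply Rdiv_lt_0_compat; lra.
    apply Rmult_lt_reg_r with (E + 1). lra. replace ((E - 1) / (E + 1) * (E + 1)) with (E - 1) by (field; lra). lra. }
  assert (H1th : 1 - th = 2 / (E + 1)) by (unfold th; field; lra).
  set (L := - ln (1 - th)).
  assert (HL : L < 2 * Rad).
  { unfold L. assert (ln (/ E) < ln (1 - th)).
    { apply ln_increasing. apply Rinv_0_lt_compat; lra. rewrite H1th.
      apply Rmult_lt_reg_r with (E * (E + 1)). nra.
      replace (/ E * (E * (E + 1))) with (E + 1) by (field; lra).
      replace (2 / (E + 1) * (E * (E + 1))) with (2 * E) by (field; lra). lra. }
    rewrite ln_Rinv in H by lra. unfold E in H. rewrite ln_exp in H. lra. }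
  assert (HL0 : 0 <= L).
  { unfold L. assert (ln (1 - th) <= ln 1). { destruct (Req_dec th 0). lra.
      left. apply ln_increasing; lra. } rewrite ln_1 in H. lra. }
  destruct (nat_unbounded (th * (E - 1) / 2 / (2 * Rad - L))) as [n0 Hn0].
  set (n := S n0).
  assert (Hn : 0 < INR n) by (unfold n; rewrite S_INR; specialize (pos_INR n0); lra).
  set (h := th / INR n).
  assert (Hh : 0 < h) by (unfold h; apply Rdiv_lt_0_compat; lra).
  assert (Hnh : INR n * h = th) by (unfold h; field; lra).
  assert (HDa : 0 < Rabs D) by (apply Rabs_pos_lt, D_nz).
  set (k0 := PI / (2 * Rabs D)).
  assert (Hk0 : 0 < k0) by (unfold k0; apply Rdiv_lt_0_compat; specialize PI_RGT_0; lra).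
  set (H := fun i : nat => / (1 - INR (S i) * h)).
  assert (Hi : forall i, (i < n)%nat -> INR (S i) * h <= th).
  { intros i Hi. rewrite <- Hnh. apply Rmult_le_compat_r. lra. apply le_INR. lia. }
  assert (HH : forall i, (i < n)%nat -> 0 < H i).
  { intros i Hi'. unfold H. apply Rinv_0_lt_compat. specialize (Hi i Hi'). lra. }
  set (bp := fun i j : nat => Box3 (INR i * h) (INR (S i) * h) (INR j * h) (INR (S j) * h) 0 (k0 * H i * H j)).
  set (bm := fun i j : nat => Box3 (INR i * h) (INR (S i) * h) (- (INR (S j) * h)) (- (INR j * h)) 0 (k0 * H i * H j)).
  set (lg := flat_map (fun i => flat_map (fun j => bp i j :: bm i j :: nil) (seq 0 n)) (seq 0 n)).
  set (Sp := fun q : pt * R => 0 <= fst (fst q) <= th /\ - th <= snd (fst q) <= th /\ 0 <= snd q /\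
     snd q < k0 / ((1 - fst (fst q)) * (1 - Rabs (snd (fst q))))).
  destruct (cov_of_list box3 (pt * R) box3_vol in_box3 box3_vol_nn Sp lg (Box3 0 0 0 0 0 0)) as [s0 [Hs0 Hs0b]].
  { unfold box3_vol; simpl. rewrite Rmax_left by lra. ring. }
  { intros [[X Y] y] [HX [HY [Hy0 Hy1]]]. simpl in HX, HY, Hy0, Hy1.
    destruct (cell_lemma n 0 h X) as [i [Hi1 Hi2]]; [unfold n; lia | lra | rewrite Hnh; lra |].
    assert (Hiv := Hi i Hi1).
    assert (Hht : forall j, (j < n)%nat -> Rabs Y <= INR (S j) * h -> y <= k0 * H i * H j).
    { intros j Hj HYj. assert (Hjv := Hi j Hj).
      assert (A1 : / (1 - X) <= H i) by (unfold H; apply Rinv_le_contravar; lra).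
      assert (A2 : / (1 - Rabs Y) <= H j) by (unfold H; apply Rinv_le_contravar; lra).
      assert (A3 : 0 < / (1 - X)) by (apply Rinv_0_lt_compat; lra).
      assert (A4 : 0 < / (1 - Rabs Y)) by (apply Rinv_0_lt_compat; lra).
      assert (E1 : k0 / ((1 - X) * (1 - Rabs Y)) = k0 * (/ (1 - X) * / (1 - Rabs Y))) by (field; lra).
      rewrite E1 in Hy1.
      assert (/ (1 - X) * / (1 - Rabs Y) <= H i * H j) by (apply Rmult_le_compat; lra).
      assert (k0 * (/ (1 - X) * / (1 - Rabs Y)) <= k0 * (H i * H j)) by (apply Rmult_le_compat_l; lra).
      lra. }
    destruct (Rle_dec 0 Y) as [hY|hY].
    - destruct (cell_lemma n 0 h Y) as [j [Hj1 Hj2]]; [unfold n; lia | lra | rewrite Hnh; lra |].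
      exists (bp i j). split.
      + apply in_flat_map. exists i. split. apply in_seq. lia.
        apply in_flat_map. exists j. split. apply in_seq. lia. left. auto.
      + unfold bp, in_box3. cbn [b3x1 b3x2 b3y1 b3y2 b3z1 b3z2 fst snd]. split. lra. split. lra. split. lra.
        apply Hht. auto. rewrite Rabs_right by lra. lra.
    - destruct (cell_lemma n 0 h (- Y)) as [j [Hj1 Hj2]]; [unfold n; lia | lra | rewrite Hnh; lra |].
      exists (bm i j). split.
      + apply in_flat_map. exists i. split. apply in_seq. lia.
        apply in_flat_map. exists j. split. apply in_seq. lia. right. left. auto.
      + unfold bm, in_box3. cbn [b3x1 b3x2 b3y1 b3y2 b3z1 b3z2 fst snd]. split. lra. split. lra. split. lra.
        apply Hht. auto. rewrite Rabs_left by lra. lra. }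
  set (U := rsum (fun i => h * H i) n).
  assert (Hlg : lsum box3_vol lg = 2 * k0 * (U * U)).
  { unfold lg. rewrite lsum_flat_map.
    rewrite (rsum_ext _ (fun i => 2 * k0 * rsum (fun j => (h * H i) * (h * H j)) n)).
    rewrite rsum_scal. unfold U. rewrite rsum_prod. ring.
    intros i Hi1. rewrite lsum_flat_map. rewrite <- rsum_scal. apply rsum_ext.
    intros j Hj1. simpl lsum. unfold bp, bm, box3_vol. cbn [b3x1 b3x2 b3y1 b3y2 b3z1 b3z2].
    assert (HHi := HH i Hi1). assert (HHj := HH j Hj1).
    assert (Pk : 0 <= k0 * H i * H j) by (apply Rmult_le_pos; [apply Rmult_le_pos|]; lra).
    rewrite !S_INR.
    replace ((INR i + 1) * h - INR i * h) with h by ring.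
    replace ((INR j + 1) * h - INR j * h) with h by ring.
    replace (- (INR j * h) - - ((INR j + 1) * h)) with h by ring.
    replace (k0 * H i * H j - 0) with (k0 * H i * H j) by ring.
    rewrite !(Rmax_right 0 h) by lra. rewrite (Rmax_right 0 (k0 * H i * H j)) by lra. ring. }
  assert (HU : 0 <= U <= 2 * Rad).
  { split. unfold U. apply rsum_nonneg. intros i Hi1. specialize (HH i Hi1). nra.
    set (f := fun i : nat => / (1 - INR i * h)).
    assert (Hfi : forall i, (i <= n)%nat -> 0 < 1 - INR i * h).
    { intros i Hi1. assert (INR i * h <= th). { rewrite <- Hnh. apply Rmult_le_compat_r. lra. apply le_INR. lia. } lra. }
    assert (E1 : U = rsum (fun i => h * f i) n + rsum (fun i => (- (h * f i)) - (- (h * f (S i)))) n).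
    { unfold U. rewrite <- rsum_plus. apply rsum_ext. intros i _. unfold H, f. ring. }
    rewrite rsum_tele in E1.
    assert (Ef0 : f 0%nat = 1) by (unfold f; simpl; rewrite Rmult_0_l, Rminus_0_r, Rinv_1; auto).
    assert (Efn : f n = (E + 1) / 2) by (unfold f; rewrite Hnh, H1th; field; lra).
    rewrite Ef0, Efn in E1.
    assert (E2 : rsum (fun i => h * f i) n <= rsum (fun i => ln (1 - INR i * h) - ln (1 - INR (S i) * h)) n).
    { apply rsum_le. intros i Hi1. unfold f. 
      replace (1 - INR (S i) * h) with ((1 - INR i * h) - h) by (rewrite S_INR; ring).
      replace (h * / (1 - INR i * h)) with (h / (1 - INR i * h)) by (unfold Rdiv; ring).
      apply step_ln. auto. assert (HS := Hfi (S i) ltac:(lia)). rewrite S_INR in HS. lra. }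
    rewrite (rsum_tele (fun i => ln (1 - INR i * h))) in E2.
    change (INR 0) with 0 in E2. rewrite Rmult_0_l, Rminus_0_r, ln_1, Hnh in E2. fold L in E2.
    assert (E3 : h * ((E + 1) / 2) - h * 1 = th * (E - 1) / 2 / INR n) by (unfold h; field; lra).
    assert (E4 : th * (E - 1) / 2 / INR n < 2 * Rad - L).
    { apply Rmult_lt_reg_r with (INR n). auto.
      replace (th * (E - 1) / 2 / INR n * INR n) with (th * (E - 1) / 2) by (field; lra).
      assert (INR n0 < INR n) by (unfold n; rewrite S_INR; lra).
      replace (th * (E - 1) / 2) with ((th * (E - 1) / 2 / (2 * Rad - L)) * (2 * Rad - L)) by (field; lra).
      rewrite (Rmult_comm (2 * Rad - L)). apply Rmult_lt_compat_r; lra. }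
    unfold L in *. lra. }
  assert (HdXY : detXY <> 0) by (rewrite detXY_eq; unfold Rdiv; apply Rmult_integral_contrapositive; split; [lra|apply Rinv_neq_0_compat, D_nz]).
  assert (G := good3_lin _ _ _ _ HdXY).
  destruct (G Sp s0 e Hs0 He) as [s1 [Hs1 Hs1b]].
  fold detXY in Hs1b. rewrite detXY_eq in Hs1b.
  exists s1. split.
  - eapply (cov_mono box3 (pt * R) box3_vol in_box3). exact Hs1.
    intros [p y] [[Hb Ht] [Hy0 Hy1]]. cbv beta. unfold lift3. simpl fst. simpl snd. rewrite XYm_eq.
    unfold Sp. simpl fst. simpl snd.
    cbn [fst snd] in Hy0, Hy1.
    destruct (tri_coords p Ht) as [HX HY].
    assert (Hf := proj1 (ball_char C p Rad hopen hconv h0 (T_sub_C p (tri_T p Ht)) Ht bd_C) Hb).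
    assert (Hth' := X_lt_th (Xc p) Rad HX Hf). fold E th in Hth'.
    assert (Hd := dens_bound p HX HY).
    assert (HYa := HY). apply Rabs_def2 in HYa.
    refine (conj (conj _ _) (conj (conj _ _) (conj _ _))); try lra.
    replace (k0 / ((1 - Xc p) * (1 - Rabs (Yc p)))) with (PI / (2 * Rabs D * (1 - Xc p) * (1 - Rabs (Yc p)))).
    lra. unfold k0. field. lra.
  - assert (Eabs : / Rabs (2 / D) = Rabs D / 2).
    { unfold Rdiv. rewrite Rabs_mult, Rabs_Rinv by apply D_nz. rewrite (Rabs_right 2) by lra. field. lra. }
    rewrite Eabs in Hs1b.
    assert (Rabs D / 2 * s0 <= Rabs D / 2 * (2 * k0 * (U * U))) by (apply Rmult_le_compat_l; lra).
    assert (Rabs D / 2 * (2 * k0 * (U * U)) = PI / 2 * (U * U)) by (unfold k0; field; lra).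
    assert (U * U <= 4 * Rad ^ 2) by nra.
    specialize PI_RGT_0. intros. nra.
Qed.

End Main.

Theorem lemma2p5 (C : pt -> Prop) (P Q : pt)
  (hopen : is_open C) (hbdd : is_bounded C) (hconv : is_convex C)
  (h0 : C porig) (hPQ : P <> Q)
  (hseg1 : forall x, segment P Q x -> boundary C x)
  (hseg2 : forall x, segment (popp P) (popp Q) x -> boundary C x)
  (Rad : R) (hR : 0 < Rad) :
  (forall x,
     (hilbert_ball C Rad x /\ open_hull3 P porig Q x) <->
     (hilbert_ball (open_hull4 P Q (popp P) (popp Q)) Rad x /\
      open_hull3 P porig Q x)) /\
  hilbert_measure_le C
    (fun x => hilbert_ball C Rad x /\ open_hull3 P porig Q x)
    (2 * PI * Rad ^ 2).
Proof.
  split.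
  - intros x. apply part1; auto.
  - apply part2; auto.
Qed.
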